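(* Let $k\ge1$ and let $q_1,q_2$ be Gaussian beams of degree $k$ with poles $x_1,x_2\in\mathbb S^2$ respectively, and let $G_1,G_2$ be the great circles perpendicular to $x_1,x_2$. Let $0\le\beta\le\pi$ be the angle between $x_1$ and $x_2$. Then $$\langle q_1,q_2\rangle=\int_{\mathbb S^2}q_1\overline{q_2}=e^{ik\alpha}\left(\cos\frac\beta2\right)^{2k},$$ where $e^{ik\alpha}$, $\alpha\in[-\pi/k,\pi/k)$, is the phase shift at the intersection points of $G_1$ and $G_2$, namely $$e^{ik\alpha}=\frac{q_1(y_1)}{q_2(y_1)}=\frac{q_1(y_2)}{q_2(y_2)},$$ $y_1,y_2$ being the two intersection points of $G_1$ and $G_2$; if the poles coincide, $e^{ik\alpha}=q_1(y)/q_2(y)$ for any point $y$ where they do not vanish.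
   Context: $\mathbb S^2\subset\mathbb R^3$ is the round unit sphere with coordinates $x=(\sin\phi\cos\theta,\sin\phi\sin\theta,\cos\phi)$. The standard Gaussian beam of degree $k$ is $Q_k(\phi,\theta)=C_kP_k^k(\cos\phi)e^{ik\theta}$, where $P_k^k$ is the associated Legendre function and $C_k>0$ normalizes $\|Q_k\|_{L^2(\mathbb S^2)}=1$; it has pole the north pole $(0,0,1)$, concentrates on the equator and propagates in the positive direction (right-hand rule). A Gaussian beam of degree $k$ with pole $x\in\mathbb S^2$ is a function of the form $q(y)=e^{ic}Q_k(Ry)$, $c\in\mathbb R$, where $R\in SO(3)$ satisfies $Rx=(0,0,1)$; its modulus is maximal on the great circle perpendicular to $x$. *)

(* Defs.v *)
From Stdlib Require Import Reals ClassicalEpsilon Factorial.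
From Coquelicot Require Import Coquelicot.
Open Scope R_scope.

Record vec3 := mkv { v1 : R; v2 : R; v3 : R }.
Definition dot (a b : vec3) : R := v1 a * v1 b + v2 a * v2 b + v3 a * v3 b.
Definition vopp (a : vec3) : vec3 := mkv (- v1 a) (- v2 a) (- v3 a).
Definition cross (a b : vec3) : vec3 :=
  mkv (v2 a * v3 b - v3 a * v2 b) (v3 a * v1 b - v1 a * v3 b) (v1 a * v2 b - v2 a * v1 b).
Definition on_sphere (a : vec3) : Prop := dot a a = 1.
Definition north : vec3 := mkv 0 0 1.

Record mat3 := mkm { r1 : vec3; r2 : vec3; r3 : vec3 }.
Definition mapply (M : mat3) (a : vec3) : vec3 := mkv (dot (r1 M) a) (dot (r2 M) a) (dot (r3 M) a).
Definition det3 (M : mat3) : R := dot (r1 M) (cross (r2 M) (r3 M)).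
Definition SO3 (M : mat3) : Prop :=
  dot (r1 M) (r1 M) = 1 /\ dot (r2 M) (r2 M) = 1 /\ dot (r3 M) (r3 M) = 1 /\
  dot (r1 M) (r2 M) = 0 /\ dot (r1 M) (r3 M) = 0 /\ dot (r2 M) (r3 M) = 0 /\
  det3 M = 1.

Definition sph (phi theta : R) : vec3 :=
  mkv (sin phi * cos theta) (sin phi * sin theta) (cos phi).

Definition cis (t : R) : C := (cos t, sin t).

(* Legendre polynomial (Rodrigues) and associated Legendre function
   P_l^m(x) = (-1)^m (1-x^2)^{m/2} d^m/dx^m P_l(x)  (Condon-Shortley phase) *)
Definition Legendre (l : nat) (x : R) : R :=
  / (2 ^ l * INR (Factorial.fact l)) * Derive_n (fun t => (t ^ 2 - 1) ^ l) l x.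
Definition assocLegendre (l m : nat) (x : R) : R :=
  (-1) ^ m * (sqrt (1 - x ^ 2)) ^ m * Derive_n (Legendre l) m x.

Definition sphere_int (f : vec3 -> C) : C :=
  RInt (V := C_R_CompleteNormedModule) (fun phi => RInt (V := C_R_CompleteNormedModule) (fun theta => Cmult (RtoC (sin phi)) (f (sph phi theta))) 0 (2 * PI)) 0 PI.

Definition Q0c (k : nat) (phi theta : R) : C :=
  Cmult (RtoC (assocLegendre k k (cos phi))) (cis (INR k * theta)).

Definition Ck (k : nat) : R :=
  / sqrt (fst (RInt (V := C_R_CompleteNormedModule) (fun phi => RInt (V := C_R_CompleteNormedModule) (fun theta =>
        Cmult (RtoC (sin phi)) (Cmult (Q0c k phi theta) (Cconj (Q0c k phi theta)))) 0 (2 * PI)) 0 PI)).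

Definition Qc (k : nat) (phi theta : R) : C := Cmult (RtoC (Ck k)) (Q0c k phi theta).

Definition coords (z : vec3) : R * R :=
  epsilon (inhabits (0, 0)) (fun p => 0 <= fst p <= PI /\ sph (fst p) (snd p) = z).
Definition Qpt (k : nat) (z : vec3) : C := Qc k (fst (coords z)) (snd (coords z)).

Definition is_gaussian_beam (k : nat) (x : vec3) (q : vec3 -> C) : Prop :=
  exists (M : mat3) (c : R), SO3 M /\ mapply M x = north /\
    forall y, on_sphere y -> q y = Cmult (cis c) (Qpt k (mapply M y)).

Definition great_circle (x y : vec3) : Prop := on_sphere y /\ dot x y = 0.

(* Main.v *)
Require Import Defs.
From Stdlib Require Import Reals Lra Lia List Factorial ClassicalEpsilon ZArith Wf_nat.
From Coquelicot Require Import Coquelicot.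
Open Scope R_scope.

Lemma contR (f : R -> R) x : ex_derive f x -> continuous f x.
Proof. intro H. apply (ex_derive_continuous (K:=R_AbsRing) (V:=R_NormedModule)). exact H. Qed.

Definition J (x y : R) (p c : nat) : R := RInt (fun t => sin t ^ p * cos t ^ c) x y.

Lemma cont_sc p c t : continuous (fun t => sin t ^ p * cos t ^ c) t.
Proof. apply contR. auto_derive. auto. Qed.

Lemma ex_J x y p c : ex_RInt (fun t => sin t ^ p * cos t ^ c) x y.
Proof. apply (ex_RInt_continuous (V:=R_CompleteNormedModule)). intros; apply cont_sc. Qed.

Lemma is_J x y p c : is_RInt (fun t => sin t ^ p * cos t ^ c) x y (J x y p c).
Proof. apply (RInt_correct (V:=R_CompleteNormedModule)), ex_J. Qed.

Lemma J_deriv x y p c : sin x = 0 -> sin y = 0 ->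
  INR (S p) * J x y p (S (S c)) - INR (S c) * J x y (S (S p)) c = 0.
Proof.
  intros Hx Hy.
  set (f := fun t => sin t ^ (S p) * cos t ^ (S c)).
  set (df := fun t => INR (S p) * (sin t ^ p * cos t ^ (S (S c))) - INR (S c) * (sin t ^ (S (S p)) * cos t ^ c)).
  assert (H1 : is_RInt df x y (minus (f y) (f x))).
  { apply (is_RInt_derive (V:=R_CompleteNormedModule)).
    - intros t _. unfold f, df. auto_derive; auto. simpl. ring.
    - intros t _. apply contR. unfold df. auto_derive. auto. }
  assert (H2 : is_RInt df x y (INR (S p) * J x y p (S (S c)) - INR (S c) * J x y (S (S p)) c)).
  { apply (is_RInt_minus (V:=R_NormedModule)); apply (is_RInt_scal (V:=R_NormedModule)); apply is_J. }
  apply (is_RInt_unique (V:=R_CompleteNormedModule)) in H1. apply (is_RInt_unique (V:=R_CompleteNormedModule)) in H2.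
  rewrite <- H2, H1. unfold f. rewrite Hx, Hy. unfold minus, plus, opp; simpl. ring.
Qed.

Lemma J_split x y p c : J x y p (S (S c)) = J x y p c - J x y (S (S p)) c.
Proof.
  unfold J. rewrite <- (RInt_minus (V:=R_CompleteNormedModule)); try apply ex_J.
  apply RInt_ext. intros t _. unfold minus, plus, opp; simpl.
  pose proof (sin2_cos2 t). unfold Rsqr in H. 
  replace (cos t * (cos t * cos t ^ c)) with ((1 - sin t * sin t) * cos t ^ c) by (rewrite <- H; ring).
  ring.
Qed.

Lemma J_R1 x y p c : sin x = 0 -> sin y = 0 ->
  INR (p + c + 2) * J x y (S (S p)) c = INR (S p) * J x y p c.
Proof.
  intros Hx Hy. pose proof (J_deriv x y p c Hx Hy). rewrite J_split in H.
  rewrite !plus_INR, !S_INR in *. simpl in *. lra.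
Qed.

Lemma J_R2 x y p c : sin x = 0 -> sin y = 0 ->
  INR (p + c + 2) * J x y p (S (S c)) = INR (S c) * J x y p c.
Proof.
  intros Hx Hy. pose proof (J_deriv x y p c Hx Hy).
  assert (E : J x y (S (S p)) c = J x y p c - J x y p (S (S c))) by (rewrite J_split; ring).
  rewrite E in H.
  rewrite !plus_INR, !S_INR in *. simpl in *. lra.
Qed.

Lemma J_c1 x y p : sin x = 0 -> sin y = 0 -> J x y p 1 = 0.
Proof.
  intros Hx Hy.
  set (f := fun t => sin t ^ (S p)).
  assert (H1 : is_RInt (fun t => INR (S p) * (sin t ^ p * cos t ^ 1)) x y (minus (f y) (f x))).
  { apply (is_RInt_derive (V:=R_CompleteNormedModule)).
    - intros t _. unfold f. auto_derive; auto. simpl. ring.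
    - intros t _. apply contR. auto_derive. auto. }
  assert (H2 : is_RInt (fun t => INR (S p) * (sin t ^ p * cos t ^ 1)) x y (INR (S p) * J x y p 1)).
  { apply (is_RInt_scal (V:=R_NormedModule)); apply is_J. }
  apply (is_RInt_unique (V:=R_CompleteNormedModule)) in H1. apply (is_RInt_unique (V:=R_CompleteNormedModule)) in H2.
  rewrite H1 in H2. unfold f in H2. rewrite Hx, Hy in H2.
  assert (E : INR (S p) * J x y p 1 = 0). { rewrite <- H2. unfold minus, plus, opp; simpl. ring. }
  assert (0 < INR (S p)) by (apply lt_0_INR; lia).
  apply Rmult_integral in E. destruct E; [lra|auto].
Qed.

Lemma J_sin1 : J 0 (2 * PI) 1 0 = 0.
Proof.
  set (f := fun t => - cos t).
  assert (H1 : is_RInt (fun t => sin t ^ 1 * cos t ^ 0) 0 (2*PI) (minus (f (2*PI)) (f 0))).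
  { apply (is_RInt_derive (V:=R_CompleteNormedModule)).
    - intros t _. unfold f. auto_derive; auto. simpl. ring.
    - intros t _. apply cont_sc. }
  apply (is_RInt_unique (V:=R_CompleteNormedModule)) in H1. unfold J. rewrite H1. unfold f. rewrite cos_2PI, cos_0.
  unfold minus, plus, opp; simpl. ring.
Qed.

Definition T (a b : nat) := J 0 (2 * PI) b a.
Definition SI (p c : nat) := J 0 PI p c.
Definition mom (a b c : nat) := T a b * SI (a + b + 1) c.

Lemma sin2PI : sin (2 * PI) = 0.
Proof. apply sin_2PI. Qed.

Lemma T_R_a a b : INR (a + b + 2) * T (S (S a)) b = INR (S a) * T a b.
Proof. unfold T. replace (a + b + 2)%nat with (b + a + 2)%nat by lia. apply J_R2. apply sin_0. apply sin2PI. Qed.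
Lemma T_R_b a b : INR (a + b + 2) * T a (S (S b)) = INR (S b) * T a b.
Proof. unfold T. replace (a + b + 2)%nat with (b + a + 2)%nat by lia. apply J_R1. apply sin_0. apply sin2PI. Qed.
Lemma S_R_p p c : INR (p + c + 2) * SI (S (S p)) c = INR (S p) * SI p c.
Proof. unfold SI. apply J_R1. apply sin_0. apply sin_PI. Qed.
Lemma S_R_c p c : INR (p + c + 2) * SI p (S (S c)) = INR (S c) * SI p c.
Proof. unfold SI. apply J_R2. apply sin_0. apply sin_PI. Qed.

Lemma INR_pos n : 0 < INR (S n).
Proof. apply lt_0_INR. lia. Qed.

Lemma mom_R_a a b c : INR (a + b + c + 3) * mom (S (S a)) b c = INR (S a) * mom a b c.
Proof.
  unfold mom. pose proof (T_R_a a b). pose proof (S_R_p (a + b + 1) c).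
  replace (S (S a) + b + 1)%nat with (S (S (a + b + 1))) by lia.
  replace (a + b + 1 + c + 2)%nat with (a + b + c + 3)%nat in H0 by lia.
  apply Rmult_eq_reg_l with (INR (a + b + 2)).
  2: { apply Rgt_not_eq. replace (a + b + 2)%nat with (S (a + b + 1)) by lia. apply INR_pos. }
  transitivity ((INR (a + b + 2) * T (S (S a)) b) * (INR (a + b + c + 3) * SI (S (S (a + b + 1))) c)).
  ring. rewrite H, H0. replace (S (a + b + 1)) with (a + b + 2)%nat by lia. ring.
Qed.

Lemma mom_R_b a b c : INR (a + b + c + 3) * mom a (S (S b)) c = INR (S b) * mom a b c.
Proof.
  unfold mom. pose proof (T_R_b a b). pose proof (S_R_p (a + b + 1) c).
  replace (a + S (S b) + 1)%nat with (S (S (a + b + 1))) by lia.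
  replace (a + b + 1 + c + 2)%nat with (a + b + c + 3)%nat in H0 by lia.
  apply Rmult_eq_reg_l with (INR (a + b + 2)).
  2: { apply Rgt_not_eq. replace (a + b + 2)%nat with (S (a + b + 1)) by lia. apply INR_pos. }
  transitivity ((INR (a + b + 2) * T a (S (S b))) * (INR (a + b + c + 3) * SI (S (S (a + b + 1))) c)).
  ring. rewrite H, H0. replace (S (a + b + 1)) with (a + b + 2)%nat by lia. ring.
Qed.

Lemma mom_R_c a b c : INR (a + b + c + 3) * mom a b (S (S c)) = INR (S c) * mom a b c.
Proof.
  unfold mom. pose proof (S_R_c (a + b + 1) c).
  replace (a + b + 1 + c + 2)%nat with (a + b + c + 3)%nat in H by lia.
  transitivity (T a b * (INR (a + b + c + 3) * SI (a + b + 1) (S (S c)))). ring.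
  rewrite H. ring.
Qed.

Lemma mom_zero_a b c : mom 1 b c = 0.
Proof. unfold mom, T. rewrite J_c1. ring. apply sin_0. apply sin2PI. Qed.
Lemma mom_zero_b c : mom 0 1 c = 0.
Proof. unfold mom, T. rewrite J_sin1. ring. Qed.
Lemma mom_zero_c : mom 0 0 1 = 0.
Proof. unfold mom, SI. simpl. rewrite J_c1. ring. apply sin_0. apply sin_PI. Qed.

Lemma mom_cyc_n n : forall a b c, (a + b + c = n)%nat -> mom a b c = mom c a b.
Proof.
  induction n as [n IH] using lt_wf_ind. intros a b c Hn.
  destruct a as [|[|a]].
  - destruct b as [|[|b]].
    + destruct c as [|[|c]].
      * reflexivity.
      * rewrite mom_zero_c, mom_zero_a. reflexivity.
      * apply Rmult_eq_reg_l with (INR (0 + 0 + c + 3)). 2: { apply Rgt_not_eq. replace (0+0+c+3)%nat with (S (c+2)) by lia. apply INR_pos. }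
        rewrite mom_R_c. replace (0 + 0 + c + 3)%nat with (c + 0 + 0 + 3)%nat by lia. rewrite mom_R_a.
        f_equal. apply (IH (c + 0 + 0)%nat). lia. lia.
    + rewrite mom_zero_b. destruct c as [|[|c]].
      * rewrite mom_zero_c. reflexivity.
      * rewrite mom_zero_a. reflexivity.
      * apply Rmult_eq_reg_l with (INR (0 + 1 + c + 3)). 2: { apply Rgt_not_eq. replace (0+1+c+3)%nat with (S (c+3)) by lia. apply INR_pos. }
        replace (0 + 1 + c + 3)%nat with (c + 0 + 1 + 3)%nat by lia. rewrite mom_R_a.
        rewrite <- (IH (c + 0 + 1)%nat) by lia. rewrite mom_zero_b. ring.
    + apply Rmult_eq_reg_l with (INR (0 + b + c + 3)). 2: { apply Rgt_not_eq. replace (0+b+c+3)%nat with (S (b+c+2)) by lia. apply INR_pos. }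
      rewrite mom_R_b. replace (0 + b + c + 3)%nat with (c + 0 + b + 3)%nat by lia. rewrite mom_R_c.
      f_equal. apply (IH (0 + b + c)%nat). lia. lia.
  - rewrite mom_zero_a. destruct b as [|[|b]].
    + destruct c as [|[|c]].
      * rewrite mom_zero_b. reflexivity.
      * rewrite mom_zero_a. reflexivity.
      * apply Rmult_eq_reg_l with (INR (1 + 0 + c + 3)). 2: { apply Rgt_not_eq. replace (1+0+c+3)%nat with (S (c+3)) by lia. apply INR_pos. }
        replace (1 + 0 + c + 3)%nat with (c + 1 + 0 + 3)%nat by lia. rewrite mom_R_a.
        rewrite <- (IH (c + 1 + 0)%nat) by lia. rewrite mom_zero_a. ring.
    + destruct c as [|[|c]].
      * rewrite mom_zero_b. reflexivity.
      * rewrite mom_zero_a. reflexivity.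
      * apply Rmult_eq_reg_l with (INR (1 + 1 + c + 3)). 2: { apply Rgt_not_eq. replace (1+1+c+3)%nat with (S (c+4)) by lia. apply INR_pos. }
        replace (1 + 1 + c + 3)%nat with (c + 1 + 1 + 3)%nat by lia. rewrite mom_R_a.
        rewrite <- (IH (c + 1 + 1)%nat) by lia. rewrite mom_zero_a. ring.
    + apply Rmult_eq_reg_l with (INR (1 + b + c + 3)). 2: { apply Rgt_not_eq. replace (1+b+c+3)%nat with (S (b+c+3)) by lia. apply INR_pos. }
      replace (1 + b + c + 3)%nat with (c + 1 + b + 3)%nat by lia. rewrite mom_R_c.
      rewrite <- (IH (c + 1 + b)%nat) by lia. rewrite mom_zero_a. ring.
  - apply Rmult_eq_reg_l with (INR (a + b + c + 3)). 2: { apply Rgt_not_eq. replace (a+b+c+3)%nat with (S (a+b+c+2)) by lia. apply INR_pos. }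
    rewrite mom_R_a. replace (a + b + c + 3)%nat with (c + a + b + 3)%nat by lia. rewrite mom_R_b.
    f_equal. apply (IH (a + b + c)%nat). lia. lia.
Qed.

Lemma mom_cyc a b c : mom a b c = mom c a b.
Proof. apply (mom_cyc_n (a + b + c)). reflexivity. Qed.

Lemma S_pos k : 0 < SI (2 * k + 1) 0.
Proof.
  induction k.
  - unfold SI. simpl.
    assert (H : is_RInt (fun t => sin t ^ 1 * cos t ^ 0) 0 PI (minus (- cos PI) (- cos 0))).
    { apply (is_RInt_derive (V:=R_CompleteNormedModule) (fun t => - cos t)).
      - intros t _. auto_derive; auto. simpl; ring.
      - intros t _. apply cont_sc. }
    apply (is_RInt_unique (V:=R_CompleteNormedModule)) in H. unfold J. rewrite H. rewrite cos_PI, cos_0. unfold minus, plus, opp; simpl. lra.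
  - pose proof (S_R_p (2 * k + 1) 0).
    replace (S (S (2 * k + 1))) with (2 * S k + 1)%nat in H by lia.
    assert (0 < INR (2 * k + 1 + 0 + 2)) by (replace (2 * k + 1 + 0 + 2)%nat with (S (2*k+2)) by lia; apply INR_pos).
    assert (0 < INR (S (2 * k + 1))) by apply INR_pos.
    nra.
Qed.

Lemma is_RInt_C (f : R -> C) a b (l : C) :
  is_RInt (fun t => fst (f t)) a b (fst l) -> is_RInt (fun t => snd (f t)) a b (snd l) ->
  is_RInt (V:=C_R_CompleteNormedModule) f a b l.
Proof. intros H1 H2. destruct l as [l1 l2].
  apply (is_RInt_fct_extend_pair (U:=R_NormedModule) (V:=R_NormedModule) f a b l1 l2 H1 H2). Qed.

Lemma is_RInt_C_fst (f : R -> C) a b (l : C) :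
  is_RInt (V:=C_R_CompleteNormedModule) f a b l -> is_RInt (fun t => fst (f t)) a b (fst l).
Proof. intros H. apply (is_RInt_fct_extend_fst (U:=R_NormedModule) (V:=R_NormedModule) f a b l H). Qed.

Lemma is_RInt_C_snd (f : R -> C) a b (l : C) :
  is_RInt (V:=C_R_CompleteNormedModule) f a b l -> is_RInt (fun t => snd (f t)) a b (snd l).
Proof. intros H. apply (is_RInt_fct_extend_snd (U:=R_NormedModule) (V:=R_NormedModule) f a b l H). Qed.

Lemma RInt_C_eq (f : R -> C) a b (l : C) :
  is_RInt (fun t => fst (f t)) a b (fst l) -> is_RInt (fun t => snd (f t)) a b (snd l) ->
  RInt (V:=C_R_CompleteNormedModule) f a b = l.
Proof. intros. apply is_RInt_unique. apply is_RInt_C; auto. Qed.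

Definition mono (e : nat * nat * nat) (z : vec3) : R :=
  let '(a, b, c) := e in v1 z ^ a * v2 z ^ b * v3 z ^ c.
Definition mome (e : nat * nat * nat) : R := let '(a, b, c) := e in mom a b c.
Definition poly := list (C * (nat * nat * nat)).

Fixpoint peval (l : poly) (z : vec3) : C :=
  match l with nil => RtoC 0 | (c, e) :: l' => Cplus (Cmult c (RtoC (mono e z))) (peval l' z) end.
Fixpoint pint (l : poly) : C :=
  match l with nil => RtoC 0 | (c, e) :: l' => Cplus (Cmult c (RtoC (mome e))) (pint l') end.
Fixpoint psumR (g : C -> R) (h : nat * nat * nat -> R) (l : poly) : R :=
  match l with nil => 0 | (c, e) :: l' => g c * h e + psumR g h l' end.

Lemma peval_fst l z : fst (peval l z) = psumR fst (fun e => mono e z) l.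
Proof. induction l as [|[c e] l IH]; simpl. reflexivity. rewrite IH. ring. Qed.
Lemma peval_snd l z : snd (peval l z) = psumR snd (fun e => mono e z) l.
Proof. induction l as [|[c e] l IH]; simpl. reflexivity. rewrite IH. ring. Qed.
Lemma pint_fst l : fst (pint l) = psumR fst mome l.
Proof. induction l as [|[c e] l IH]; simpl. reflexivity. rewrite IH. ring. Qed.
Lemma pint_snd l : snd (pint l) = psumR snd mome l.
Proof. induction l as [|[c e] l IH]; simpl. reflexivity. rewrite IH. ring. Qed.

Definition innerval (e : nat * nat * nat) (phi : R) : R :=
  let '(a, b, c) := e in T a b * (sin phi ^ (a + b + 1) * cos phi ^ c).

Lemma is_RInt_psum_gen (g : C -> R) (F : nat * nat * nat -> R -> R) (V : nat * nat * nat -> R) x y l :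
  (forall e, is_RInt (F e) x y (V e)) ->
  is_RInt (fun t => psumR g (fun e => F e t) l) x y (psumR g V l).
Proof.
  intro HF. induction l as [|[c e] l IH]; simpl.
  - apply (is_RInt_ext (V:=R_NormedModule) (fun _ => 0)). auto.
    pose proof (is_RInt_const (V:=R_NormedModule) x y 0) as H.
    replace (scal (y - x) (0:R_NormedModule)) with 0 in H. exact H.
    unfold scal; simpl; unfold mult; simpl. ring.
  - apply (is_RInt_plus (V:=R_NormedModule) (fun t => g c * F e t)); auto.
    apply (is_RInt_scal (V:=R_NormedModule)). auto.
Qed.

Lemma inner_mono (phi : R) (e : nat * nat * nat) :
  is_RInt (fun t => sin phi * mono e (sph phi t)) 0 (2 * PI) (innerval e phi).
Proof.
  destruct e as [[a b] c]. simpl.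
  apply (is_RInt_ext (V:=R_NormedModule) (fun t => (sin phi ^ (a + b + 1) * cos phi ^ c) * (sin t ^ b * cos t ^ a))).
  { intros t _. rewrite !Rpow_mult_distr, !pow_add. simpl. ring. }
  replace (T a b * (sin phi ^ (a + b + 1) * cos phi ^ c)) with ((sin phi ^ (a + b + 1) * cos phi ^ c) * T a b) by ring.
  apply (is_RInt_scal (V:=R_NormedModule)). apply is_J.
Qed.

Lemma outer_mono (e : nat * nat * nat) :
  is_RInt (innerval e) 0 PI (mome e).
Proof.
  destruct e as [[a b] c]. simpl. unfold mom.
  apply (is_RInt_scal (V:=R_NormedModule)). apply is_J.
Qed.

Lemma sphere_int_peval l : sphere_int (peval l) = pint l.
Proof.
  unfold sphere_int.
  rewrite (RInt_ext (V:=C_R_CompleteNormedModule) _ (fun phi => (psumR fst (fun e => innerval e phi) l, psumR snd (fun e => innerval e phi) l))).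
  - apply RInt_C_eq; simpl.
    + rewrite pint_fst. apply is_RInt_psum_gen. apply outer_mono.
    + rewrite pint_snd. apply is_RInt_psum_gen. apply outer_mono.
  - intros phi _. apply RInt_C_eq; simpl.
    + apply (is_RInt_ext (V:=R_NormedModule) (fun t => psumR fst (fun e => sin phi * mono e (sph phi t)) l)).
      { intros t _. rewrite peval_fst. clear. induction l as [|[c e] l IH]; simpl. ring. rewrite IH. ring. }
      apply is_RInt_psum_gen. intro. apply inner_mono.
    + apply (is_RInt_ext (V:=R_NormedModule) (fun t => psumR snd (fun e => sin phi * mono e (sph phi t)) l)).
      { intros t _. rewrite peval_snd. clear. induction l as [|[c e] l IH]; simpl. ring. rewrite IH. ring. }
      apply is_RInt_psum_gen. intro. apply inner_mono.
Qed.

Definition IsPoly (f : vec3 -> C) := exists l, forall z, f z = peval l z.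

Lemma IsPoly_ext f g : (forall z, f z = g z) -> IsPoly f -> IsPoly g.
Proof. intros H [l Hl]. exists l. intro z. rewrite <- H. apply Hl. Qed.

Lemma IsPoly_const (c : C) : IsPoly (fun _ => c).
Proof. exists ((c, (0, 0, 0)%nat) :: nil). intro z. simpl. apply injective_projections; simpl; ring. Qed.

Lemma IsPoly_v1 : IsPoly (fun z => RtoC (v1 z)).
Proof. exists ((RtoC 1, (1, 0, 0)%nat) :: nil). intro z. simpl. apply injective_projections; simpl; ring. Qed.
Lemma IsPoly_v2 : IsPoly (fun z => RtoC (v2 z)).
Proof. exists ((RtoC 1, (0, 1, 0)%nat) :: nil). intro z. simpl. apply injective_projections; simpl; ring. Qed.
Lemma IsPoly_v3 : IsPoly (fun z => RtoC (v3 z)).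
Proof. exists ((RtoC 1, (0, 0, 1)%nat) :: nil). intro z. simpl. apply injective_projections; simpl; ring. Qed.

Lemma peval_app l1 l2 z : peval (l1 ++ l2) z = Cplus (peval l1 z) (peval l2 z).
Proof. induction l1 as [|[c e] l IH]; simpl. apply injective_projections; simpl; ring.
  rewrite IH. apply injective_projections; simpl; ring. Qed.

Lemma IsPoly_plus f g : IsPoly f -> IsPoly g -> IsPoly (fun z => Cplus (f z) (g z)).
Proof. intros [l1 H1] [l2 H2]. exists (l1 ++ l2). intro z. rewrite peval_app, H1, H2. reflexivity. Qed.

Definition eadd (e1 e2 : nat * nat * nat) : nat * nat * nat :=
  let '(a, b, c) := e1 in let '(a', b', c') := e2 in (a + a', b + b', c + c')%nat.

Lemma mono_eadd e1 e2 z : mono (eadd e1 e2) z = mono e1 z * mono e2 z.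
Proof. destruct e1 as [[a b] c], e2 as [[a' b'] c']. simpl. rewrite !pow_add. ring. Qed.

Definition pmul1 (c : C) (e : nat * nat * nat) (l : poly) : poly :=
  map (fun p => (Cmult c (fst p), eadd e (snd p))) l.
Fixpoint pmul (l1 l2 : poly) : poly :=
  match l1 with nil => nil | (c, e) :: l => pmul1 c e l2 ++ pmul l l2 end.

Lemma peval_pmul1 c e l z : peval (pmul1 c e l) z = Cmult (Cmult c (RtoC (mono e z))) (peval l z).
Proof. induction l as [|[d e'] l IH]; simpl. apply injective_projections; simpl; ring.
  rewrite IH, mono_eadd. apply injective_projections; simpl; ring. Qed.

Lemma peval_pmul l1 l2 z : peval (pmul l1 l2) z = Cmult (peval l1 z) (peval l2 z).
Proof. induction l1 as [|[c e] l IH]; simpl. apply injective_projections; simpl; ring.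
  rewrite peval_app, peval_pmul1, IH. apply injective_projections; simpl; ring. Qed.

Lemma IsPoly_mult f g : IsPoly f -> IsPoly g -> IsPoly (fun z => Cmult (f z) (g z)).
Proof. intros [l1 H1] [l2 H2]. exists (pmul l1 l2). intro z. rewrite peval_pmul, H1, H2. reflexivity. Qed.

Lemma IsPoly_pow f n : IsPoly f -> IsPoly (fun z => Cpow (f z) n).
Proof. intro H. induction n; simpl. apply IsPoly_const. apply IsPoly_mult; auto. Qed.

Lemma IsPoly_conj f : IsPoly f -> IsPoly (fun z => Cconj (f z)).
Proof. intros [l H]. exists (map (fun p => (Cconj (fst p), snd p)) l). intro z. rewrite H. clear H.
  induction l as [|[c e] l IH]; simpl. apply injective_projections; simpl; ring.
  rewrite <- IH. apply injective_projections; simpl; ring. Qed.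

Lemma IsPoly_dot u : IsPoly (fun z => RtoC (dot u z)).
Proof.
  apply (IsPoly_ext (fun z => Cplus (Cplus (Cmult (RtoC (v1 u)) (RtoC (v1 z))) (Cmult (RtoC (v2 u)) (RtoC (v2 z)))) (Cmult (RtoC (v3 u)) (RtoC (v3 z))))).
  { intro z. unfold dot. apply injective_projections; simpl; ring. }
  repeat apply IsPoly_plus; apply IsPoly_mult; try apply IsPoly_const; auto using IsPoly_v1, IsPoly_v2, IsPoly_v3.
Qed.

Lemma IsPoly_comp f M : IsPoly f -> IsPoly (fun z => f (mapply M z)).
Proof.
  intros [l H]. apply (IsPoly_ext (fun z => peval l (mapply M z))). { intro; symmetry; apply H. }
  clear H. induction l as [|[c e] l IH]; simpl. apply IsPoly_const.
  apply IsPoly_plus; auto. apply IsPoly_mult. apply IsPoly_const.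
  destruct e as [[a b] d]. simpl.
  apply (IsPoly_ext (fun z => Cmult (Cmult (Cpow (RtoC (dot (r1 M) z)) a) (Cpow (RtoC (dot (r2 M) z)) b)) (Cpow (RtoC (dot (r3 M) z)) d))).
  { intro z. rewrite <- !RtoC_pow, <- !RtoC_mult. reflexivity. }
  repeat apply IsPoly_mult; apply IsPoly_pow; apply IsPoly_dot.
Qed.

Lemma on_sphere_sph phi theta : on_sphere (sph phi theta).
Proof. unfold on_sphere, dot, sph; simpl. pose proof (sin2_cos2 phi). pose proof (sin2_cos2 theta). unfold Rsqr in *.
  replace (sin phi * cos theta * (sin phi * cos theta) + sin phi * sin theta * (sin phi * sin theta) + cos phi * cos phi)
   with (sin phi * sin phi * (sin theta * sin theta + cos theta * cos theta) + cos phi * cos phi) by ring.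
  rewrite H0. lra. Qed.

Lemma sphere_int_ext f g : (forall z, on_sphere z -> f z = g z) -> sphere_int f = sphere_int g.
Proof. intro H. unfold sphere_int. apply (RInt_ext (V:=C_R_CompleteNormedModule)). intros. apply (RInt_ext (V:=C_R_CompleteNormedModule)). intros. rewrite H. reflexivity. apply on_sphere_sph. Qed.

Definition cyc (z : vec3) : vec3 := mkv (v2 z) (v3 z) (v1 z).
Definition ecyc (e : nat * nat * nat) : nat * nat * nat := let '(a, b, c) := e in (c, a, b).

Lemma sphere_int_cyc f : IsPoly f -> sphere_int (fun z => f (cyc z)) = sphere_int f.
Proof.
  intros [l H]. rewrite (sphere_int_ext _ (peval (map (fun p => (fst p, ecyc (snd p))) l))).
  rewrite (sphere_int_ext f (peval l)) by auto.
  rewrite !sphere_int_peval. clear H. induction l as [|[c e] l IH]; simpl. reflexivity.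
  rewrite IH. destruct e as [[a b] d]. simpl. rewrite (mom_cyc a b d). reflexivity.
  intros z _. rewrite H. clear H. induction l as [|[c e] l IH]; simpl. reflexivity.
  rewrite IH. destruct e as [[a b] d]. simpl. f_equal. f_equal. f_equal. ring.
Qed.

Definition rz (t : R) (z : vec3) : vec3 :=
  mkv (cos t * v1 z - sin t * v2 z) (sin t * v1 z + cos t * v2 z) (v3 z).

Lemma rz_sph t phi th : rz t (sph phi th) = sph phi (th + t).
Proof. unfold rz, sph; simpl. rewrite cos_plus, sin_plus. f_equal; ring. Qed.

Lemma sph_period phi th : sph phi (th + 2 * PI) = sph phi th.
Proof. unfold sph. rewrite cos_plus, sin_plus, cos_2PI, sin_2PI. f_equal; ring. Qed.

Lemma ex_RInt_cont (g : R -> R) a b : (forall x, continuous g x) -> ex_RInt g a b.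
Proof. intro H. apply (ex_RInt_continuous (V:=R_CompleteNormedModule)). intros; apply H. Qed.

Lemma periodic_shift (g : R -> R) t : (forall x, continuous g x) -> (forall x, g (x + 2*PI) = g x) ->
  RInt (fun x => g (x + t)) 0 (2*PI) = RInt g 0 (2*PI).
Proof.
  intros Hc Hp.
  assert (Ex : forall a b, ex_RInt g a b) by (intros; apply ex_RInt_cont; auto).
  assert (E1 : RInt (fun x => g (x + t)) 0 (2*PI) = RInt g t (2*PI + t)).
  { rewrite <- (RInt_ext (V:=R_CompleteNormedModule) (fun y => scal 1 (g (1 * y + t)))).
    rewrite (RInt_comp_lin (V:=R_CompleteNormedModule)). f_equal; ring.
    replace (1 * 0 + t) with t by ring. replace (1 * (2*PI) + t) with (2*PI+t) by ring. apply Ex.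
    intros x _. change (scal 1 (g (1 * x + t))) with (1 * g (1 * x + t)). rewrite Rmult_1_l. f_equal. ring. }
  assert (E2 : RInt g (2*PI) (2*PI + t) = RInt g 0 t).
  { transitivity (RInt (fun y => scal 1 (g (1 * y + 2*PI))) 0 t).
    - rewrite (RInt_comp_lin (V:=R_CompleteNormedModule)). f_equal; ring. apply Ex.
    - apply (RInt_ext (V:=R_CompleteNormedModule)). intros x _.
      change (scal 1 (g (1 * x + 2*PI))) with (1 * g (1 * x + 2*PI)). rewrite !Rmult_1_l, Hp. reflexivity. }
  rewrite E1.
  rewrite <- (RInt_Chasles (V:=R_CompleteNormedModule) g t (2*PI) (2*PI + t)) by apply Ex.
  rewrite E2.
  rewrite <- (RInt_Chasles (V:=R_CompleteNormedModule) g 0 t (2*PI)) by apply Ex.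
  unfold plus; simpl. ring.
Qed.

Lemma ex_derive_psum g (F : nat * nat * nat -> R -> R) l x :
  (forall e, ex_derive (F e) x) -> ex_derive (fun t => psumR g (fun e => F e t) l) x.
Proof.
  intro H. induction l as [|[c e] l IH]; simpl.
  - apply ex_derive_const.
  - apply (ex_derive_plus (fun t => g c * F e t)); auto. apply ex_derive_scal. auto.
Qed.

Lemma fst_h l phi th : fst (Cmult (RtoC (sin phi)) (peval l (sph phi th))) = psumR fst (fun e => sin phi * mono e (sph phi th)) l.
Proof. simpl. rewrite peval_fst, peval_snd. clear. induction l as [|[c e] l IH]; simpl. ring. rewrite <- IH. ring. Qed.
Lemma snd_h l phi th : snd (Cmult (RtoC (sin phi)) (peval l (sph phi th))) = psumR snd (fun e => sin phi * mono e (sph phi th)) l.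
Proof. simpl. rewrite peval_fst, peval_snd. clear. induction l as [|[c e] l IH]; simpl. ring. rewrite <- IH. ring. Qed.

Lemma cont_psum g l phi x : continuous (fun th => psumR g (fun e => sin phi * mono e (sph phi th)) l) x.
Proof.
  apply contR. apply ex_derive_psum. intros [[a b] c]. unfold mono, sph; simpl. auto_derive. auto.
Qed.

Lemma RInt_C_split (f : R -> C) a b : ex_RInt (fun t => fst (f t)) a b -> ex_RInt (fun t => snd (f t)) a b ->
  RInt (V:=C_R_CompleteNormedModule) f a b = (RInt (fun t => fst (f t)) a b, RInt (fun t => snd (f t)) a b).
Proof. intros H1 H2. apply RInt_C_eq; simpl; apply (RInt_correct (V:=R_CompleteNormedModule)); auto. Qed.

Lemma sphere_int_rz f t : IsPoly f -> sphere_int (fun z => f (rz t z)) = sphere_int f.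
Proof.
  intros [l H].
  rewrite (sphere_int_ext _ (fun z => peval l (rz t z))) by (intros; apply H).
  rewrite (sphere_int_ext f (peval l)) by (intros; apply H).
  unfold sphere_int. apply (RInt_ext (V:=C_R_CompleteNormedModule)). intros phi _.
  rewrite (RInt_ext (V:=C_R_CompleteNormedModule) _ (fun th => Cmult (RtoC (sin phi)) (peval l (sph phi (th + t))))).
  2: { intros. rewrite rz_sph. reflexivity. }
  rewrite !RInt_C_split.
  - f_equal.
    + pose (G := fun th => psumR fst (fun e => sin phi * mono e (sph phi th)) l).
      transitivity (RInt (fun x => G (x + t)) 0 (2*PI)).
      { apply (RInt_ext (V:=R_CompleteNormedModule)). intros. unfold G. apply fst_h. }
      rewrite (periodic_shift G t).
      * apply (RInt_ext (V:=R_CompleteNormedModule)). intros. symmetry. apply fst_h.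
      * intro. apply cont_psum.
      * intro. unfold G. rewrite sph_period. reflexivity.
    + pose (G := fun th => psumR snd (fun e => sin phi * mono e (sph phi th)) l).
      transitivity (RInt (fun x => G (x + t)) 0 (2*PI)).
      { apply (RInt_ext (V:=R_CompleteNormedModule)). intros. unfold G. apply snd_h. }
      rewrite (periodic_shift G t).
      * apply (RInt_ext (V:=R_CompleteNormedModule)). intros. symmetry. apply snd_h.
      * intro. apply cont_psum.
      * intro. unfold G. rewrite sph_period. reflexivity.
  - apply ex_RInt_cont. intro. apply (continuous_ext (fun th => psumR fst (fun e => sin phi * mono e (sph phi th)) l)). intro; symmetry; apply fst_h. apply cont_psum.
  - apply ex_RInt_cont. intro. apply (continuous_ext (fun th => psumR snd (fun e => sin phi * mono e (sph phi th)) l)). intro; symmetry; apply snd_h. apply cont_psum.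
  - apply ex_RInt_cont. intro. apply (continuous_ext (fun x => (fun th => psumR fst (fun e => sin phi * mono e (sph phi th)) l) (x + t))). intro; symmetry; apply fst_h.
    apply (continuous_comp (fun th => th + t) (fun th => psumR fst (fun e => sin phi * mono e (sph phi th)) l)). apply contR. auto_derive; auto. apply cont_psum.
  - apply ex_RInt_cont. intro. apply (continuous_ext (fun x => (fun th => psumR snd (fun e => sin phi * mono e (sph phi th)) l) (x + t))). intro; symmetry; apply snd_h.
    apply (continuous_comp (fun th => th + t) (fun th => psumR snd (fun e => sin phi * mono e (sph phi th)) l)). apply contR. auto_derive; auto. apply cont_psum.
Qed.

Lemma sq3_zero x y z : x * x + y * y + z * z = 0 -> x = 0 /\ y = 0 /\ z = 0.
Proof. intros. repeat split; nra. Qed.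

Section Entries.
Variables a b c d e f g h i : R.
Hypothesis N1 : a*a + b*b + c*c = 1.
Hypothesis N2 : d*d + e*e + f*f = 1.
Hypothesis N3 : g*g + h*h + i*i = 1.
Hypothesis O12 : a*d + b*e + c*f = 0.
Hypothesis O13 : a*g + b*h + c*i = 0.
Hypothesis O23 : d*g + e*h + f*i = 0.
Hypothesis Det : a*(e*i - f*h) + b*(f*g - d*i) + c*(d*h - e*g) = 1.

Lemma cof1 : a = e*i - f*h /\ b = f*g - d*i /\ c = d*h - e*g.
Proof.
  assert (V : (e*i - f*h)*(e*i - f*h) + (f*g - d*i)*(f*g - d*i) + (d*h - e*g)*(d*h - e*g) = 1).
  { transitivity ((d*d+e*e+f*f)*(g*g+h*h+i*i) - (d*g+e*h+f*i)*(d*g+e*h+f*i)). ring. rewrite N2, N3, O23. ring. }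
  assert (Z : (a - (e*i - f*h))*(a - (e*i - f*h)) + (b - (f*g - d*i))*(b - (f*g - d*i)) + (c - (d*h - e*g))*(c - (d*h - e*g)) = 0).
  { transitivity ((a*a+b*b+c*c) - 2 * (a*(e*i - f*h) + b*(f*g - d*i) + c*(d*h - e*g)) + ((e*i - f*h)*(e*i - f*h) + (f*g - d*i)*(f*g - d*i) + (d*h - e*g)*(d*h - e*g))). ring.
    rewrite N1, Det, V. ring. }
  apply sq3_zero in Z. lra.
Qed.

Lemma cof2 : d = h*c - i*b /\ e = i*a - g*c /\ f = g*b - h*a.
Proof.
  assert (V : (h*c - i*b)*(h*c - i*b) + (i*a - g*c)*(i*a - g*c) + (g*b - h*a)*(g*b - h*a) = 1).
  { transitivity ((g*g+h*h+i*i)*(a*a+b*b+c*c) - (a*g+b*h+c*i)*(a*g+b*h+c*i)). ring. rewrite N1, N3, O13. ring. }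
  assert (Z : (d - (h*c - i*b))*(d - (h*c - i*b)) + (e - (i*a - g*c))*(e - (i*a - g*c)) + (f - (g*b - h*a))*(f - (g*b - h*a)) = 0).
  { transitivity ((d*d+e*e+f*f) - 2 * (a*(e*i - f*h) + b*(f*g - d*i) + c*(d*h - e*g)) + ((h*c - i*b)*(h*c - i*b) + (i*a - g*c)*(i*a - g*c) + (g*b - h*a)*(g*b - h*a))). ring.
    rewrite N2, Det, V. ring. }
  apply sq3_zero in Z. lra.
Qed.

Lemma cof3 : g = b*f - c*e /\ h = c*d - a*f /\ i = a*e - b*d.
Proof.
  assert (V : (b*f - c*e)*(b*f - c*e) + (c*d - a*f)*(c*d - a*f) + (a*e - b*d)*(a*e - b*d) = 1).
  { transitivity ((a*a+b*b+c*c)*(d*d+e*e+f*f) - (a*d+b*e+c*f)*(a*d+b*e+c*f)). ring. rewrite N1, N2, O12. ring. }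
  assert (Z : (g - (b*f - c*e))*(g - (b*f - c*e)) + (h - (c*d - a*f))*(h - (c*d - a*f)) + (i - (a*e - b*d))*(i - (a*e - b*d)) = 0).
  { transitivity ((g*g+h*h+i*i) - 2 * (a*(e*i - f*h) + b*(f*g - d*i) + c*(d*h - e*g)) + ((b*f - c*e)*(b*f - c*e) + (c*d - a*f)*(c*d - a*f) + (a*e - b*d)*(a*e - b*d))). ring.
    rewrite N3, Det, V. ring. }
  apply sq3_zero in Z. lra.
Qed.

Lemma cols : a*a + d*d + g*g = 1 /\ b*b + e*e + h*h = 1 /\ c*c + f*f + i*i = 1 /\
  a*b + d*e + g*h = 0 /\ a*c + d*f + g*i = 0 /\ b*c + e*f + h*i = 0.
Proof.
  destruct cof1 as [Ha [Hb Hc]]. destruct cof2 as [Hd [He Hf]]. destruct cof3 as [Hg [Hh Hi]].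
  repeat split.
  - transitivity (a*(e*i - f*h) + d*(h*c - i*b) + g*(b*f - c*e)). rewrite <- Ha, <- Hd, <- Hg. ring. rewrite <- Det. ring.
  - transitivity (b*(f*g - d*i) + e*(i*a - g*c) + h*(c*d - a*f)). rewrite <- Hb, <- He, <- Hh. ring. rewrite <- Det. ring.
  - transitivity (c*(d*h - e*g) + f*(g*b - h*a) + i*(a*e - b*d)). rewrite <- Hc, <- Hf, <- Hi. ring. rewrite <- Det. ring.
  - transitivity ((e*i - f*h)*b + (h*c - i*b)*e + (b*f - c*e)*h). rewrite <- Ha, <- Hd, <- Hg. ring. ring.
  - transitivity ((e*i - f*h)*c + (h*c - i*b)*f + (b*f - c*e)*i). rewrite <- Ha, <- Hd, <- Hg. ring. ring.
  - transitivity ((f*g - d*i)*c + (i*a - g*c)*f + (c*d - a*f)*i). rewrite <- Hb, <- He, <- Hh. ring. ring.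
Qed.
End Entries.

Ltac destr_M M := destruct M as [[?a ?b ?c] [?d ?e ?f] [?g ?h ?i]].

Lemma so3_unfold M : SO3 M -> let '(mkm (mkv a b c) (mkv d e f) (mkv g h i)) := M in
  a*a + b*b + c*c = 1 /\ d*d + e*e + f*f = 1 /\ g*g + h*h + i*i = 1 /\
  a*d + b*e + c*f = 0 /\ a*g + b*h + c*i = 0 /\ d*g + e*h + f*i = 0 /\
  a*(e*i - f*h) + b*(f*g - d*i) + c*(d*h - e*g) = 1.
Proof.
  destruct M as [[a b c] [d e f] [g h i]]. unfold SO3, dot, det3, cross; simpl.
  intros [H1 [H2 [H3 [H4 [H5 [H6 H7]]]]]]. repeat split; try lra. unfold dot in H7; simpl in H7. lra.
Qed.

Lemma mapply_dot M u v : SO3 M -> dot (mapply M u) (mapply M v) = dot u v.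
Proof.
  intro HM. apply so3_unfold in HM. destruct M as [[a b c] [d e f] [g h i]].
  destruct HM as [N1 [N2 [N3 [O12 [O13 [O23 Det]]]]]].
  destruct (cols a b c d e f g h i) as [C1 [C2 [C3 [C12 [C13 C23]]]]]; try assumption.
  destruct u as [u1 u2 u3], v as [w1 w2 w3]. unfold mapply, dot; simpl.
  transitivity (u1*w1*(a*a + d*d + g*g) + u2*w2*(b*b + e*e + h*h) + u3*w3*(c*c + f*f + i*i)
     + (u1*w2 + u2*w1)*(a*b + d*e + g*h) + (u1*w3 + u3*w1)*(a*c + d*f + g*i) + (u2*w3+u3*w2)*(b*c + e*f + h*i)).
  ring. rewrite C1, C2, C3, C12, C13, C23. ring.
Qed.

Lemma on_sphere_mapply M y : SO3 M -> on_sphere y -> on_sphere (mapply M y).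
Proof. intros HM Hy. unfold on_sphere. rewrite mapply_dot; auto. Qed.

Lemma angle_exists x y : x * x + y * y = 1 -> exists t, cos t = x /\ sin t = y.
Proof.
  intro H. assert (Hx : -1 <= x <= 1) by nra.
  assert (Hs : sqrt (1 - x²) = Rabs y).
  { rewrite <- sqrt_Rsqr_abs. f_equal. unfold Rsqr. lra. }
  destruct (Rle_dec 0 y).
  - exists (acos x). rewrite cos_acos, sin_acos; auto. rewrite Hs, Rabs_right; lra.
  - exists (- acos x). rewrite cos_neg, sin_neg, cos_acos, sin_acos; auto. rewrite Hs, Rabs_left; lra.
Qed.

Definition rx (t : R) (z : vec3) : vec3 :=
  mkv (v1 z) (cos t * v2 z - sin t * v3 z) (sin t * v2 z + cos t * v3 z).

Lemma euler M : SO3 M -> exists al be ga, forall z, mapply M z = rz al (rx be (rz ga z)).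
Proof.
  intro HM. apply so3_unfold in HM. destruct M as [[a b c] [d e f] [g h i]].
  destruct HM as [N1 [N2 [N3 [O12 [O13 [O23 Det]]]]]].
  destruct (cols a b c d e f g h i) as [C1 [C2 [C3 [C12 [C13 C23]]]]]; try assumption.
  destruct (cof1 a b c d e f g h i) as [Ha [Hb Hc]]; try assumption.
  destruct (cof2 a b c d e f g h i) as [Hd [He Hf]]; try assumption.
  destruct (cof3 a b c d e f g h i) as [Hg [Hh Hi]]; try assumption.
  assert (Hi1 : -1 <= i <= 1) by nra.
  set (be := acos i).
  assert (cb : cos be = i) by (apply cos_acos; auto).
  assert (sb : sin be = sqrt (1 - i²)) by (apply sin_acos; auto).
  assert (sb2 : sin be * sin be = 1 - i * i).
  { rewrite sb. rewrite sqrt_sqrt. unfold Rsqr; ring. unfold Rsqr; nra. }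
  assert (sbp : 0 <= sin be) by (rewrite sb; apply sqrt_pos).
  destruct (Req_dec (sin be) 0) as [s0 | s0].
  -
    assert (Ii : i * i = 1) by (rewrite s0 in sb2; lra).
    assert (Z1 : c * c + f * f + 0 * 0 = 0) by lra. apply sq3_zero in Z1. destruct Z1 as [-> [-> _]].
    assert (Z2 : g * g + h * h + 0 * 0 = 0) by lra. apply sq3_zero in Z2. destruct Z2 as [-> [-> _]].
    assert (C1' : a * a + d * d = 1) by lra.
    destruct (angle_exists a d C1') as [al [ca sa]].
    exists al, be, 0. intro z. destruct z as [z1 z2 z3]. unfold mapply, rz, rx, dot; simpl.
    rewrite cos_0, sin_0, s0, cb.
    assert (Ii' : (i - 1) * (i + 1) = 0) by lra.
    apply Rmult_integral in Ii'.
    destruct Ii' as [Ii' | Ii'].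
    + assert (H : i = 1) by lra. assert (Eb : b = -d) by (rewrite Hb, H; ring). assert (Ee : e = a) by (rewrite He, H; ring).
      rewrite Eb, Ee, H, ca, sa. f_equal; ring.
    + assert (H : i = -1) by lra. assert (Eb : b = d) by (rewrite Hb, H; ring). assert (Ee : e = -a) by (rewrite He, H; ring).
      rewrite Eb, Ee, H, ca, sa. f_equal; ring.
  - set (s := sin be) in *.
    assert (sbpos : 0 < s) by lra.
    assert (Ii : i * i = 1 - s * s) by lra.
    assert (A1 : (-f / s) * (-f / s) + (c / s) * (c / s) = 1).
    { replace ((-f / s) * (-f / s) + (c / s) * (c / s)) with ((c*c + f*f) / (s * s)) by (field; lra).
      replace (c * c + f * f) with (s * s) by lra. field. lra. }
    assert (A2 : (h / s) * (h / s) + (g / s) * (g / s) = 1).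
    { replace ((h / s) * (h / s) + (g / s) * (g / s)) with ((g*g + h*h) / (s * s)) by (field; lra).
      replace (g * g + h * h) with (s * s) by lra. field. lra. }
    destruct (angle_exists _ _ A1) as [al [ca sa]].
    destruct (angle_exists _ _ A2) as [ga [cg sg]].
    assert (E11 : a * (s * s) = - f * h - c * i * g).
    { assert (ci : c * i = - a * g - b * h) by lra. rewrite ci, Hf.
      replace (s * s) with (g * g + h * h) by lra. ring. }
    assert (E12 : b * (s * s) = f * g - c * i * h).
    { assert (hi : h * i = - b * c - e * f) by lra.
      replace (c * i * h) with (c * (h * i)) by ring. rewrite hi, Hg.
      replace (s * s) with (c * c + f * f) by lra. ring. }
    assert (E21 : d * (s * s) = c * h - f * i * g).
    { assert (fi : f * i = - d * g - e * h) by lra. rewrite fi, Hc.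
      replace (s * s) with (g * g + h * h) by lra. ring. }
    assert (E22 : e * (s * s) = - c * g - f * i * h).
    { assert (fi : f * i = - d * g - e * h) by lra. rewrite fi, Hc.
      replace (s * s) with (g * g + h * h) by lra. ring. }
    exists al, be, ga. intro z. destruct z as [z1 z2 z3]. unfold mapply, rz, rx, dot; simpl.
    fold s. rewrite ca, sa, cb, cg, sg. clear ca sa cg sg A1 A2 sb sb2 sbp Ii N1 N2 N3 O12 O13 O23 Det C1 C2 C3 C12 C13 C23 Ha Hb Hc Hd He Hf Hg Hh Hi s0 Hi1.
    assert (Ea : a = (-f/s) * (h/s) - (c/s) * i * (g/s)).
    { apply Rmult_eq_reg_r with (s * s). rewrite E11. field. lra. apply Rmult_integral_contrapositive_currified; lra. }
    assert (Eb : b = - (-f/s) * (g/s) - (c/s) * i * (h/s)).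
    { apply Rmult_eq_reg_r with (s * s). rewrite E12. field. lra. apply Rmult_integral_contrapositive_currified; lra. }
    assert (Ed : d = (c/s) * (h/s) + (-f/s) * i * (g/s)).
    { apply Rmult_eq_reg_r with (s * s). rewrite E21. field. lra. apply Rmult_integral_contrapositive_currified; lra. }
    assert (Ee : e = - (c/s) * (g/s) + (-f/s) * i * (h/s)).
    { apply Rmult_eq_reg_r with (s * s). rewrite E22. field. lra. apply Rmult_integral_contrapositive_currified; lra. }
    f_equal.
    + rewrite Ea, Eb. field. lra.
    + rewrite Ed, Ee. field. lra.
    + field. lra.
Qed.

Definition cycinv (z : vec3) : vec3 := mkv (v3 z) (v1 z) (v2 z).

Lemma IsPoly_lin f (L : vec3 -> vec3) M : (forall z, L z = mapply M z) -> IsPoly f -> IsPoly (fun z => f (L z)).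
Proof. intros HL Hf. apply (IsPoly_ext (fun z => f (mapply M z))). intro; rewrite HL; auto. apply IsPoly_comp; auto. Qed.

Lemma IsPoly_rz f t : IsPoly f -> IsPoly (fun z => f (rz t z)).
Proof. apply IsPoly_lin with (mkm (mkv (cos t) (- sin t) 0) (mkv (sin t) (cos t) 0) (mkv 0 0 1)).
  intros [z1 z2 z3]. unfold rz, mapply, dot; simpl. f_equal; ring. Qed.
Lemma IsPoly_rx f t : IsPoly f -> IsPoly (fun z => f (rx t z)).
Proof. apply IsPoly_lin with (mkm (mkv 1 0 0) (mkv 0 (cos t) (- sin t)) (mkv 0 (sin t) (cos t))).
  intros [z1 z2 z3]. unfold rx, mapply, dot; simpl. f_equal; ring. Qed.
Lemma IsPoly_cycinv f : IsPoly f -> IsPoly (fun z => f (cycinv z)).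
Proof. apply IsPoly_lin with (mkm (mkv 0 0 1) (mkv 1 0 0) (mkv 0 1 0)).
  intros [z1 z2 z3]. unfold cycinv, mapply, dot; simpl. f_equal; ring. Qed.

Lemma sphere_int_fext f g : (forall z, f z = g z) -> sphere_int f = sphere_int g.
Proof. intros H. apply sphere_int_ext. auto. Qed.

Lemma sphere_int_cycinv f : IsPoly f -> sphere_int (fun z => f (cycinv z)) = sphere_int f.
Proof.
  intro Hf. rewrite <- (sphere_int_cyc (fun z => f (cycinv z))) by (apply IsPoly_cycinv; auto).
  apply sphere_int_fext. intros [z1 z2 z3]. reflexivity.
Qed.

Lemma sphere_int_rx f t : IsPoly f -> sphere_int (fun z => f (rx t z)) = sphere_int f.
Proof.
  intro Hf.
  rewrite (sphere_int_fext _ (fun z => (fun u => f (cycinv (rz t u))) (cyc z))).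
  2: { intros [z1 z2 z3]. unfold rx, cycinv, rz, cyc; simpl. reflexivity. }
  transitivity (sphere_int (fun u => f (cycinv (rz t u)))).
  { apply (sphere_int_cyc (fun u => f (cycinv (rz t u)))). apply (IsPoly_rz (fun u => f (cycinv u))), IsPoly_cycinv; auto. }
  transitivity (sphere_int (fun u => f (cycinv u))).
  { apply (sphere_int_rz (fun u => f (cycinv u))). apply IsPoly_cycinv; auto. }
  apply sphere_int_cycinv; auto.
Qed.

Lemma sphere_int_SO3 f M : IsPoly f -> SO3 M -> sphere_int (fun z => f (mapply M z)) = sphere_int f.
Proof.
  intros Hf HM. destruct (euler M HM) as [al [be [ga Hm]]].
  rewrite (sphere_int_fext _ (fun z => (fun u => f (rz al (rx be u))) (rz ga z))) by (intro; rewrite Hm; reflexivity).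
  transitivity (sphere_int (fun u => f (rz al (rx be u)))).
  { apply (sphere_int_rz (fun u => f (rz al (rx be u)))). apply (IsPoly_rx (fun u => f (rz al u))), IsPoly_rz; auto. }
  transitivity (sphere_int (fun u => f (rz al u))).
  { apply (sphere_int_rx (fun u => f (rz al u))). apply IsPoly_rz; auto. }
  apply sphere_int_rz; auto.
Qed.

Lemma is_RInt_Cplus (f g : R -> C) a b lf lg :
  is_RInt (V:=C_R_CompleteNormedModule) f a b lf -> is_RInt (V:=C_R_CompleteNormedModule) g a b lg ->
  is_RInt (V:=C_R_CompleteNormedModule) (fun t => Cplus (f t) (g t)) a b (Cplus lf lg).
Proof.
  intros Hf Hg. apply is_RInt_C; simpl.
  - apply (is_RInt_plus (V:=R_NormedModule) (fun t => fst (f t)) (fun t => fst (g t))); apply is_RInt_C_fst; auto.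
  - apply (is_RInt_plus (V:=R_NormedModule) (fun t => snd (f t)) (fun t => snd (g t))); apply is_RInt_C_snd; auto.
Qed.

Lemma is_RInt_Cmult_l (c : C) (f : R -> C) a b l :
  is_RInt (V:=C_R_CompleteNormedModule) f a b l ->
  is_RInt (V:=C_R_CompleteNormedModule) (fun t => Cmult c (f t)) a b (Cmult c l).
Proof.
  intros Hf. apply is_RInt_C; simpl.
  - apply (is_RInt_minus (V:=R_NormedModule) (fun t => fst c * fst (f t)) (fun t => snd c * snd (f t)));
    apply (is_RInt_scal (V:=R_NormedModule)); [apply is_RInt_C_fst | apply is_RInt_C_snd]; auto.
  - apply (is_RInt_plus (V:=R_NormedModule) (fun t => fst c * snd (f t)) (fun t => snd c * fst (f t)));
    apply (is_RInt_scal (V:=R_NormedModule)); [apply is_RInt_C_snd | apply is_RInt_C_fst]; auto.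
Qed.

Lemma is_RInt_C_ext (f g : R -> C) a b l : (forall t, f t = g t) ->
  is_RInt (V:=C_R_CompleteNormedModule) f a b l -> is_RInt (V:=C_R_CompleteNormedModule) g a b l.
Proof. intros H Hf. apply (is_RInt_ext (V:=C_R_CompleteNormedModule) f); auto. Qed.

Lemma is_RInt_R0 a b : is_RInt (fun _ : R => 0) a b 0.
Proof. pose proof (is_RInt_const (V:=R_NormedModule) a b 0) as H.
  replace (scal (b - a) (0:R_NormedModule)) with 0 in H. exact H. unfold scal; simpl; unfold mult; simpl. ring. Qed.

Lemma is_RInt_C0 a b : is_RInt (V:=C_R_CompleteNormedModule) (fun _ => RtoC 0) a b (RtoC 0).
Proof. apply is_RInt_C; simpl; apply is_RInt_R0. Qed.

Lemma is_RInt_RtoC (f : R -> R) a b l : is_RInt f a b l ->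
  is_RInt (V:=C_R_CompleteNormedModule) (fun t => RtoC (f t)) a b (RtoC l).
Proof. intro H. apply is_RInt_C; simpl; auto. apply is_RInt_R0. Qed.

Lemma cis_add x y : Cmult (cis x) (cis y) = cis (x + y).
Proof. unfold cis. rewrite cos_plus, sin_plus. apply injective_projections; simpl; ring. Qed.

Lemma cis_pow x n : Cpow (cis x) n = cis (INR n * x).
Proof. induction n. simpl. unfold cis. rewrite Rmult_0_l, cos_0, sin_0. reflexivity.
  simpl Cpow. rewrite IHn, cis_add. f_equal. rewrite S_INR. ring. Qed.

Lemma int_cis_pow n : is_RInt (V:=C_R_CompleteNormedModule) (fun t => Cpow (cis t) (S n)) 0 (2 * PI) (RtoC 0).
Proof.
  apply (is_RInt_C_ext (fun t => cis (INR (S n) * t))). intro; symmetry; apply cis_pow.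
  assert (m0 : 0 < INR (S n)) by (apply lt_0_INR; lia).
  set (m := INR (S n)) in *.
  assert (s2 : sin (m * (2 * PI)) = 0).
  { replace (m * (2 * PI)) with (0 + 2 * INR (S n) * PI) by (unfold m; ring). rewrite sin_period. apply sin_0. }
  assert (c2 : cos (m * (2 * PI)) = 1).
  { replace (m * (2 * PI)) with (0 + 2 * INR (S n) * PI) by (unfold m; ring). rewrite cos_period. apply cos_0. }
  apply is_RInt_C; simpl.
  - pose proof (is_RInt_derive (V:=R_CompleteNormedModule) (fun t => sin (m * t) / m) (fun t => cos (m * t)) 0 (2 * PI)) as H. cbv beta in H.
    match type of H with context [is_RInt _ _ _ ?v] => replace v with 0 in H end.
    apply H. intros. auto_derive; auto. field. lra.
    intros. apply contR. auto_derive. auto.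
    rewrite s2, Rmult_0_r, sin_0. unfold minus, plus, opp; simpl. field. lra.
  - pose proof (is_RInt_derive (V:=R_CompleteNormedModule) (fun t => - cos (m * t) / m) (fun t => sin (m * t)) 0 (2 * PI)) as H. cbv beta in H.
    match type of H with context [is_RInt _ _ _ ?v] => replace v with 0 in H end.
    apply H. intros. auto_derive; auto. field. lra.
    intros. apply contR. auto_derive. auto.
    rewrite c2, Rmult_0_r, cos_0. unfold minus, plus, opp; simpl. field. lra.
Qed.

Fixpoint cpe (l : list C) (z : C) : C :=
  match l with nil => RtoC 0 | a :: l' => Cplus a (Cmult z (cpe l' z)) end.

Lemma int_cpe_shift l : forall n, is_RInt (V:=C_R_CompleteNormedModule)
  (fun t => Cmult (Cpow (cis t) (S n)) (cpe l (cis t))) 0 (2 * PI) (RtoC 0).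
Proof.
  induction l as [|a l IH]; intro n; simpl.
  - apply (is_RInt_C_ext (fun _ => RtoC 0)). intro. apply injective_projections; simpl; ring. apply is_RInt_C0.
  - apply (is_RInt_C_ext (fun t => Cplus (Cmult a (Cpow (cis t) (S n))) (Cmult (Cpow (cis t) (S (S n))) (cpe l (cis t))))).
    { intro t. simpl. apply injective_projections; simpl; ring. }
    replace (RtoC 0) with (Cplus (Cmult a (RtoC 0)) (RtoC 0)) by (apply injective_projections; simpl; ring).
    apply is_RInt_Cplus. apply is_RInt_Cmult_l. apply int_cis_pow. apply IH.
Qed.

Lemma int_cpe l : is_RInt (V:=C_R_CompleteNormedModule) (fun t => cpe l (cis t)) 0 (2 * PI)
  (Cmult (RtoC (2 * PI)) (cpe l (RtoC 0))).
Proof.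
  destruct l as [|a l]; simpl.
  - replace (Cmult (RtoC (2 * PI)) (RtoC 0)) with (RtoC 0) by (apply injective_projections; simpl; ring). apply is_RInt_C0.
  - replace (Cmult (RtoC (2 * PI)) (Cplus a (Cmult (RtoC 0) (cpe l (RtoC 0))))) with (Cplus (Cmult a (RtoC (2 * PI))) (RtoC 0))
      by (apply injective_projections; simpl; ring).
    apply is_RInt_Cplus.
    + apply (is_RInt_C_ext (fun t => Cmult a (RtoC 1))). intro; apply injective_projections; simpl; ring.
      apply is_RInt_Cmult_l. apply (is_RInt_C_ext (fun t => RtoC 1)). reflexivity.
      replace (RtoC (2 * PI)) with (RtoC ((2 * PI) * 1)) by (f_equal; ring).
      apply is_RInt_RtoC. pose proof (is_RInt_const (V:=R_NormedModule) 0 (2*PI) 1) as H.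
      replace (scal (2 * PI - 0) (1 : R_NormedModule)) with (2 * PI * 1) in H. exact H.
      unfold scal; simpl; unfold mult; simpl. ring.
    + apply (is_RInt_C_ext (fun t => Cmult (Cpow (cis t) 1) (cpe l (cis t)))). intro. simpl. f_equal.
      apply injective_projections; simpl; ring.
      apply int_cpe_shift.
Qed.

Fixpoint cpadd (l m : list C) : list C :=
  match l, m with nil, _ => m | _, nil => l | a :: l', b :: m' => Cplus a b :: cpadd l' m' end.
Fixpoint cpmul (l m : list C) : list C :=
  match l with nil => nil | a :: l' => cpadd (map (Cmult a) m) (RtoC 0 :: cpmul l' m) end.
Fixpoint cppow (l : list C) (k : nat) : list C :=
  match k with O => RtoC 1 :: nil | S k' => cpmul l (cppow l k') end.

Lemma cpe_add l m z : cpe (cpadd l m) z = Cplus (cpe l z) (cpe m z).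
Proof. revert m. induction l as [|a l IH]; intros [|b m]; simpl; try (apply injective_projections; simpl; ring).
  rewrite IH. apply injective_projections; simpl; ring. Qed.
Lemma cpe_map a m z : cpe (map (Cmult a) m) z = Cmult a (cpe m z).
Proof. induction m as [|b m IH]; simpl. apply injective_projections; simpl; ring. rewrite IH. apply injective_projections; simpl; ring. Qed.
Lemma cpe_mul l m z : cpe (cpmul l m) z = Cmult (cpe l z) (cpe m z).
Proof. induction l as [|a l IH]; simpl. apply injective_projections; simpl; ring.
  rewrite cpe_add, cpe_map. simpl. rewrite IH. apply injective_projections; simpl; ring. Qed.
Lemma cpe_pow l k z : cpe (cppow l k) z = Cpow (cpe l z) k.
Proof. induction k; simpl. apply injective_projections; simpl; ring. rewrite cpe_mul, IHk. reflexivity. Qed.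

Definition P (k : nat) (z : vec3) : C := Cpow (v1 z, v2 z) k.

Lemma P_sph k phi th : P k (sph phi th) = Cmult (RtoC (sin phi ^ k)) (cis (INR k * th)).
Proof.
  unfold P, sph; simpl. rewrite <- cis_pow, RtoC_pow, <- Cpow_mult_l. f_equal.
  unfold cis. apply injective_projections; simpl; ring.
Qed.

Lemma key_id b phi th :
  let s := sin phi in
  Cmult (cis th) (v1 (sph phi th), - (cos b * v2 (sph phi th) - sin b * v3 (sph phi th))) =
  cpe (RtoC (s * (1 + cos b) / 2) :: (0, sin b * cos phi) :: RtoC (s * (1 - cos b) / 2) :: nil) (cis th).
Proof.
  intro s. unfold s, sph, cis; simpl.
  pose proof (sin2_cos2 th) as H. unfold Rsqr in H.
  apply injective_projections; simpl.
  - apply Rminus_diag_uniq.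
    transitivity (sin phi * (1 + cos b) / 2 * (sin th * sin th + cos th * cos th - 1)). field.
    rewrite H. ring.
  - field.
Qed.

Lemma inner_d k b phi th :
  Cmult (RtoC (sin phi)) (Cmult (P k (sph phi th)) (Cconj (P k (rx b (sph phi th))))) =
  Cmult (RtoC (sin phi * sin phi ^ k))
    (cpe (cppow (RtoC (sin phi * (1 + cos b) / 2) :: (0, sin b * cos phi) :: RtoC (sin phi * (1 - cos b) / 2) :: nil) k) (cis th)).
Proof.
  rewrite cpe_pow, <- key_id. unfold P. rewrite Cpow_conj, <- Cpow_mult_l.
  replace (Cmult (v1 (sph phi th), v2 (sph phi th)) (Cconj (v1 (rx b (sph phi th)), v2 (rx b (sph phi th)))))
    with (Cmult (RtoC (sin phi)) (Cmult (cis th) (v1 (sph phi th), - (cos b * v2 (sph phi th) - sin b * v3 (sph phi th))))).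
  2: { unfold sph, cis, rx, Cconj; simpl. apply injective_projections; simpl; ring. }
  rewrite Cpow_mult_l, <- RtoC_pow, RtoC_mult. apply injective_projections; simpl; ring.
Qed.

Lemma dint k b : sphere_int (fun u => Cmult (P k u) (Cconj (P k (rx b u)))) =
  RtoC (2 * PI * ((1 + cos b) / 2) ^ k * SI (2 * k + 1) 0).
Proof.
  unfold sphere_int.
  rewrite (RInt_ext (V:=C_R_CompleteNormedModule) _ (fun phi => RtoC (2 * PI * ((1 + cos b) / 2) ^ k * (sin phi ^ (2 * k + 1) * cos phi ^ 0)))).
  - apply (is_RInt_unique (V:=C_R_CompleteNormedModule)). apply is_RInt_RtoC. apply (is_RInt_scal (V:=R_NormedModule)). apply is_J.
  - intros phi _. apply (is_RInt_unique (V:=C_R_CompleteNormedModule)).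
    apply (is_RInt_C_ext (fun th => Cmult (RtoC (sin phi * sin phi ^ k))
      (cpe (cppow (RtoC (sin phi * (1 + cos b) / 2) :: (0, sin b * cos phi) :: RtoC (sin phi * (1 - cos b) / 2) :: nil) k) (cis th)))).
    { intro. symmetry. apply inner_d. }
    match goal with |- is_RInt _ _ _ ?v => replace v with
      (Cmult (RtoC (sin phi * sin phi ^ k)) (Cmult (RtoC (2 * PI)) (cpe (cppow (RtoC (sin phi * (1 + cos b) / 2) :: (0, sin b * cos phi) :: RtoC (sin phi * (1 - cos b) / 2) :: nil) k) (RtoC 0)))) end.
    + apply is_RInt_Cmult_l. apply int_cpe.
    + rewrite cpe_pow. simpl cpe.
      replace (Cplus (RtoC (sin phi * (1 + cos b) / 2)) (Cmult (RtoC 0) (Cplus (0, sin b * cos phi) (Cmult (RtoC 0) (Cplus (RtoC (sin phi * (1 - cos b) / 2)) (Cmult (RtoC 0) (RtoC 0)))))))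
        with (RtoC (sin phi * (1 + cos b) / 2)) by (apply injective_projections; simpl; ring).
      rewrite <- RtoC_pow, !RtoC_mult. rewrite <- !RtoC_mult. f_equal.
      replace (2 * k + 1)%nat with (S (k + k)) by lia. simpl. rewrite pow_add.
      replace (sin phi * (1 + cos b) / 2) with (sin phi * ((1 + cos b) / 2)) by field. rewrite Rpow_mult_distr. ring.
Qed.

Lemma isd_const (a x : R) : is_derive (fun _ => a) x 0.
Proof. auto_derive; auto. Qed.
Lemma isd_plus f g x df dg : is_derive f x df -> is_derive g x dg -> is_derive (fun y => f y + g y) x (df + dg).
Proof. intros. exact (is_derive_plus (K:=R_AbsRing) (V:=R_NormedModule) f g x df dg H H0). Qed.
Lemma isd_scal f x df c : is_derive f x df -> is_derive (fun y => c * f y) x (c * df).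
Proof. intros. exact (is_derive_scal f x c df H). Qed.
Lemma isd_pow x n : is_derive (fun y => y ^ (S n)) x (INR (S n) * x ^ n).
Proof. auto_derive; auto. simpl. ring. Qed.

Fixpoint rpe (l : list R) (x : R) : R := match l with nil => 0 | a :: l' => a + x * rpe l' x end.
Fixpoint rpd (m : nat) (l : list R) : list R := match l with nil => nil | b :: l' => (INR m * b) :: rpd (S m) l' end.
Definition rpder (l : list R) : list R := match l with nil => nil | _ :: l' => rpd 1 l' end.

Lemma rpd_der l : forall m x, is_derive (fun y => y ^ (S m) * rpe l y) x (x ^ m * rpe (rpd (S m) l) x).
Proof.
  induction l as [|b l IH]; intros m x; cbn [rpe rpd].
  - apply (is_derive_ext (fun _ => 0)). intro; simpl; ring.
    replace (x ^ m * 0) with 0 by ring. apply isd_const.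
  - apply (is_derive_ext (fun y => b * y ^ (S m) + y ^ (S (S m)) * rpe l y)). intro; simpl; ring.
    replace (x ^ m * (INR (S m) * b + x * rpe (rpd (S (S m)) l) x))
      with (b * (INR (S m) * x ^ m) + x ^ (S m) * rpe (rpd (S (S m)) l) x) by (simpl; ring).
    apply isd_plus. apply isd_scal. apply isd_pow. apply IH.
Qed.

Lemma rpder_der l x : is_derive (rpe l) x (rpe (rpder l) x).
Proof.
  destruct l as [|a l]; simpl.
  - apply isd_const.
  - apply (is_derive_ext (fun y => a + y ^ 1 * rpe l y)). intro; simpl; ring.
    replace (rpe (rpd 1 l) x) with (0 + x ^ 0 * rpe (rpd 1 l) x) by (simpl; ring).
    apply isd_plus. apply isd_const. apply (rpd_der l 0 x).
Qed.

Lemma Derive_n_rpe l n x : Derive_n (rpe l) n x = rpe (Nat.iter n rpder l) x.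
Proof.
  revert x. induction n; intro x; simpl. reflexivity.
  rewrite (Derive_ext _ (rpe (Nat.iter n rpder l))) by auto.
  apply is_derive_unique. apply rpder_der.
Qed.

Lemma rpd_length m l : length (rpd m l) = length l.
Proof. revert m; induction l; intro m; simpl; auto. Qed.

Lemma rpd_last l : forall m, l <> nil -> last (rpd m l) 0 = INR (m + length l - 1) * last l 0.
Proof.
  induction l as [|b l IH]; intros m H. contradiction.
  destruct l as [|b' l'].
  - simpl. f_equal. f_equal. lia.
  - change (last (rpd m (b :: b' :: l')) 0) with (last (rpd (S m) (b' :: l')) 0).
    rewrite IH by discriminate. change (last (b :: b' :: l') 0) with (last (b' :: l') 0).
    f_equal. f_equal. simpl. lia.
Qed.

Lemma iter_rpder_top n : forall l, length l = S n -> rpe (Nat.iter n rpder l) 0 = INR (fact n) * last l 0.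
Proof.
  induction n; intros l Hl.
  - destruct l as [|a [|b l]]; simpl in *; try lia. simpl. ring.
  - rewrite Nat.iter_succ_r. destruct l as [|a l]; simpl in Hl. lia.
    rewrite IHn.
    + simpl rpder. rewrite rpd_last. 
      * destruct l as [|b l]; simpl in Hl. lia.
        change (last (a :: b :: l) 0) with (last (b :: l) 0).
        replace (1 + length (b :: l) - 1)%nat with (S n) by (simpl in *; lia).
        rewrite fact_simpl, mult_INR. ring.
      * destruct l; simpl in Hl; try lia. discriminate.
    + simpl. rewrite rpd_length. lia.
Qed.

Lemma iter_rpder_const n : forall l, length l = S n -> forall x, rpe (Nat.iter n rpder l) x = rpe (Nat.iter n rpder l) 0.
Proof.
  assert (Hlen : forall j l, length (Nat.iter j rpder l) = (length l - j)%nat).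
  { assert (LR : forall m, length (rpder m) = pred (length m)).
    { intros [|a m]; simpl. auto. apply rpd_length. }
    induction j; intro l; simpl. lia. rewrite LR, IHj. lia. }
  intros l Hl x. assert (H : length (Nat.iter n rpder l) = 1%nat) by (rewrite Hlen, Hl; lia).
  destruct (Nat.iter n rpder l) as [|a [|b m]]; simpl in H; try lia. simpl. ring.
Qed.

Fixpoint rpadd (l m : list R) : list R :=
  match l, m with nil, _ => m | _, nil => l | a :: l', b :: m' => (a + b) :: rpadd l' m' end.
Definition rpmulq (l : list R) : list R := rpadd (0 :: 0 :: l) (map Ropp l).

Lemma rpe_add l m x : rpe (rpadd l m) x = rpe l x + rpe m x.
Proof. revert m; induction l as [|a l IH]; intros [|b m]; simpl; try ring. rewrite IH. ring. Qed.
Lemma rpe_opp l x : rpe (map Ropp l) x = - rpe l x.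
Proof. induction l as [|a l IH]; simpl. ring. rewrite IH. ring. Qed.
Lemma rpe_mulq l x : rpe (rpmulq l) x = (x ^ 2 - 1) * rpe l x.
Proof. unfold rpmulq. rewrite rpe_add, rpe_opp. simpl. ring. Qed.

Lemma rpadd_len_last : forall l m, (length m < length l)%nat ->
  length (rpadd l m) = length l /\ last (rpadd l m) 0 = last l 0.
Proof.
  induction l as [|a l IH]; intros m H; simpl in H. lia.
  destruct m as [|b m].
  - destruct l; simpl; auto.
  - simpl in H. destruct (IH m) as [H1 H2]. lia. split. simpl. rewrite H1. auto.
    destruct l as [|a' l']. simpl in H. lia.
    change (rpadd (a :: a' :: l') (b :: m)) with ((a + b) :: rpadd (a' :: l') m).
    destruct (rpadd (a' :: l') m) as [|r0 l0] eqn:E. simpl in H1. lia.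
    change (last ((a + b) :: r0 :: l0) 0) with (last (r0 :: l0) 0). rewrite H2. reflexivity.
Qed.

Lemma rpmulq_prop l : l <> nil -> length (rpmulq l) = (length l + 2)%nat /\ last (rpmulq l) 0 = last l 0.
Proof.
  intro Hn. unfold rpmulq. destruct (rpadd_len_last (0 :: 0 :: l) (map Ropp l)) as [H1 H2].
  rewrite length_map. simpl. lia. split. rewrite H1. simpl. lia. rewrite H2.
  destruct l. contradiction. reflexivity.
Qed.

Definition Lq (k : nat) : list R := Nat.iter k rpmulq (1 :: nil).

Lemma Lq_prop k : Lq k <> nil /\ length (Lq k) = S (2 * k) /\ last (Lq k) 0 = 1 /\ forall x, rpe (Lq k) x = (x ^ 2 - 1) ^ k.
Proof.
  induction k as [|k [Hn [Hl [Hla He]]]].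
  - simpl. repeat split. discriminate. intro; ring.
  - unfold Lq in *. simpl. destruct (rpmulq_prop _ Hn) as [H1 H2]. repeat split.
    + intro E. rewrite E in H1. simpl in H1. lia.
    + rewrite H1, Hl. lia.
    + rewrite H2. auto.
    + intro x. rewrite rpe_mulq, He. simpl. ring.
Qed.

Lemma rpe_map_mult c l x : rpe (map (Rmult c) l) x = c * rpe l x.
Proof. induction l; simpl. ring. rewrite IHl. ring. Qed.

Lemma rpd_map c m l : rpd m (map (Rmult c) l) = map (Rmult c) (rpd m l).
Proof. revert m; induction l; intro m; simpl. auto. rewrite IHl. f_equal. ring. Qed.

Lemma iter_map c n l : Nat.iter n rpder (map (Rmult c) l) = map (Rmult c) (Nat.iter n rpder l).
Proof. induction n; simpl. auto. rewrite IHn. destruct (Nat.iter n rpder l); simpl. auto. apply rpd_map. Qed.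

Definition Dk (k : nat) : R := / (2 ^ k * INR (fact k)) * INR (fact (2 * k)).

Lemma Dk_nz k : Dk k <> 0.
Proof.
  unfold Dk. apply Rmult_integral_contrapositive_currified.
  apply Rinv_neq_0_compat. apply Rmult_integral_contrapositive_currified. apply pow_nonzero. lra.
  apply not_0_INR, fact_neq_0. apply not_0_INR, fact_neq_0.
Qed.

Lemma Derive_Legendre k x : Derive_n (Legendre k) k x = Dk k.
Proof.
  destruct (Lq_prop k) as [Hn [Hl [Hla He]]].
  set (c := / (2 ^ k * INR (fact k))).
  rewrite (Derive_n_ext _ (rpe (map (Rmult c) (Nat.iter k rpder (Lq k))))).
  2: { intro t. unfold Legendre. rewrite rpe_map_mult. fold c. f_equal.
       rewrite <- Derive_n_rpe. apply Derive_n_ext. intro; symmetry; apply He. }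
  rewrite Derive_n_rpe, iter_map, rpe_map_mult.
  rewrite <- Nat.iter_add. rewrite iter_rpder_const by (rewrite Hl; f_equal; lia).
  rewrite iter_rpder_top by (rewrite Hl; f_equal; lia). rewrite Hla. unfold Dk. fold c.
  replace (k + k)%nat with (2 * k)%nat by lia. ring.
Qed.

Lemma aL_cos k phi : 0 <= phi <= PI -> assocLegendre k k (cos phi) = (-1) ^ k * sin phi ^ k * Dk k.
Proof.
  intro Hp. unfold assocLegendre. rewrite Derive_Legendre.
  assert (0 <= sin phi) by (apply sin_ge_0; lra).
  replace (1 - cos phi ^ 2) with (sin phi ^ 2) by (pose proof (sin2_cos2 phi); unfold Rsqr in *; simpl; lra).
  rewrite sqrt_pow2 by auto. ring.
Qed.

Lemma aL_sq k phi : assocLegendre k k (cos phi) * assocLegendre k k (cos phi) = sin phi ^ (2 * k) * (Dk k * Dk k).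
Proof.
  unfold assocLegendre. rewrite Derive_Legendre.
  replace (1 - cos phi ^ 2) with (sin phi ^ 2) by (pose proof (sin2_cos2 phi); unfold Rsqr in *; simpl; lra).
  replace ((-1) ^ k * sqrt (sin phi ^ 2) ^ k * Dk k * ((-1) ^ k * sqrt (sin phi ^ 2) ^ k * Dk k))
    with (((-1) * (-1)) ^ k * (sqrt (sin phi ^ 2) ^ 2) ^ k * (Dk k * Dk k)) by (rewrite <- !pow_mult, !Rpow_mult_distr; rewrite Nat.mul_comm; rewrite pow_mult; simpl; ring).
  rewrite pow2_sqrt by (apply pow2_ge_0). replace ((-1) * (-1)) with 1 by ring. rewrite pow1.
  rewrite <- pow_mult. ring.
Qed.

Lemma Ck_val k : Ck k = / sqrt (2 * PI * (Dk k * Dk k) * SI (2 * k + 1) 0).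
Proof.
  unfold Ck. f_equal. f_equal.
  rewrite (RInt_ext (V:=C_R_CompleteNormedModule) _ (fun phi => RtoC (2 * PI * (Dk k * Dk k) * (sin phi ^ (2 * k + 1) * cos phi ^ 0)))).
  - rewrite (is_RInt_unique (V:=C_R_CompleteNormedModule) _ _ _ (RtoC (2 * PI * (Dk k * Dk k) * SI (2 * k + 1) 0))). reflexivity.
    apply is_RInt_RtoC. apply (is_RInt_scal (V:=R_NormedModule)). apply is_J.
  - intros phi _. apply (is_RInt_unique (V:=C_R_CompleteNormedModule)).
    apply (is_RInt_C_ext (fun _ => RtoC (sin phi * (sin phi ^ (2 * k) * (Dk k * Dk k))))).
    { intro th. unfold Q0c, cis. rewrite <- aL_sq. apply injective_projections; simpl.
      pose proof (sin2_cos2 (INR k * th)) as Hs. unfold Rsqr in Hs.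
      transitivity (sin phi * (assocLegendre k k (cos phi) * assocLegendre k k (cos phi)) * (sin (INR k * th) * sin (INR k * th) + cos (INR k * th) * cos (INR k * th))).
      rewrite Hs. ring. ring. ring. }
    match goal with |- is_RInt _ _ _ ?v => replace v with (RtoC ((2 * PI) * (sin phi * (sin phi ^ (2 * k) * (Dk k * Dk k))))) end.
    apply is_RInt_RtoC. pose proof (is_RInt_const (V:=R_NormedModule) 0 (2*PI) (sin phi * (sin phi ^ (2 * k) * (Dk k * Dk k)))) as H.
    replace (scal (2 * PI - 0) ((sin phi * (sin phi ^ (2 * k) * (Dk k * Dk k))) : R_NormedModule)) with ((2 * PI) * (sin phi * (sin phi ^ (2 * k) * (Dk k * Dk k)))) in H. exact H.
    unfold scal; simpl; unfold mult; simpl. ring.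
    f_equal. rewrite pow_add. simpl. ring.
Qed.

Lemma coords_spec z : on_sphere z -> 0 <= fst (coords z) <= PI /\ sph (fst (coords z)) (snd (coords z)) = z.
Proof.
  intro Hz. unfold coords. apply epsilon_spec.
  destruct z as [z1 z2 z3]. unfold on_sphere, dot in Hz; simpl in Hz.
  assert (H3 : -1 <= z3 <= 1) by nra.
  set (phi := acos z3).
  assert (cp : cos phi = z3) by (apply cos_acos; auto).
  assert (sp : sin phi = sqrt (1 - z3²)) by (apply sin_acos; auto).
  assert (sp2 : sin phi * sin phi = z1 * z1 + z2 * z2).
  { rewrite sp, sqrt_sqrt. unfold Rsqr; lra. unfold Rsqr; nra. }
  assert (spp : 0 <= sin phi) by (rewrite sp; apply sqrt_pos).
  destruct (Req_dec (sin phi) 0) as [s0 | s0].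
  - exists (phi, 0). simpl. split. apply acos_bound.
    assert (Z : z1 * z1 + z2 * z2 + 0 * 0 = 0) by (rewrite s0 in sp2; lra). apply sq3_zero in Z.
    destruct Z as [-> [-> _]]. unfold sph. rewrite s0, cp. f_equal; ring.
  - assert (A : (z1 / sin phi) * (z1 / sin phi) + (z2 / sin phi) * (z2 / sin phi) = 1).
    { replace ((z1 / sin phi) * (z1 / sin phi) + (z2 / sin phi) * (z2 / sin phi)) with ((z1 * z1 + z2 * z2) / (sin phi * sin phi)) by (field; auto).
      rewrite sp2. field. intro E. apply s0. rewrite <- sp2 in E. nra. }
    destruct (angle_exists _ _ A) as [th [ct st]].
    exists (phi, th). simpl. split. apply acos_bound.
    unfold sph. rewrite ct, st, cp. f_equal; field; auto.
Qed.

Definition Kc (k : nat) : R := Ck k * (-1) ^ k * Dk k.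

Lemma Qpt_formula k z : on_sphere z -> Qpt k z = Cmult (RtoC (Kc k)) (P k z).
Proof.
  intro Hz. destruct (coords_spec z Hz) as [Hr Hs].
  unfold Qpt. transitivity (Cmult (RtoC (Kc k)) (P k (sph (fst (coords z)) (snd (coords z))))).
  2: { rewrite Hs. reflexivity. }
  rewrite P_sph.
  set (phi := fst (coords z)) in *. set (th := snd (coords z)) in *.
  unfold Qc, Q0c. rewrite aL_cos by auto. unfold Kc.
  rewrite !RtoC_mult. apply injective_projections; simpl; ring.
Qed.

Lemma Kc_norm k : Kc k * Kc k * (2 * PI * SI (2 * k + 1) 0) = 1.
Proof.
  unfold Kc. rewrite Ck_val.
  pose proof (Dk_nz k). pose proof (S_pos k). pose proof PI_RGT_0.
  assert (X : 0 < 2 * PI * (Dk k * Dk k) * SI (2 * k + 1) 0).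
  { assert (D2 : 0 < Dk k * Dk k) by (apply Rsqr_pos_lt; auto). apply Rmult_lt_0_compat; [apply Rmult_lt_0_compat; [lra | exact D2] | auto]. }
  replace (/ sqrt (2 * PI * (Dk k * Dk k) * SI (2 * k + 1) 0) * (-1) ^ k * Dk k *
     (/ sqrt (2 * PI * (Dk k * Dk k) * SI (2 * k + 1) 0) * (-1) ^ k * Dk k) * (2 * PI * SI (2 * k + 1) 0))
   with (((-1) * (-1)) ^ k * (2 * PI * (Dk k * Dk k) * SI (2 * k + 1) 0) / (sqrt (2 * PI * (Dk k * Dk k) * SI (2 * k + 1) 0) * sqrt (2 * PI * (Dk k * Dk k) * SI (2 * k + 1) 0))).
  2: { rewrite Rpow_mult_distr. field. apply Rgt_not_eq, sqrt_lt_R0. auto. }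
  rewrite sqrt_sqrt by lra. replace ((-1) * (-1)) with 1 by ring. rewrite pow1. field. lra.
Qed.

Lemma det_mult M a b c : dot (mapply M a) (cross (mapply M b) (mapply M c)) = det3 M * dot a (cross b c).
Proof. destruct M as [[m1 m2 m3] [m4 m5 m6] [m7 m8 m9]]. destruct a, b, c. unfold det3, mapply, cross, dot; simpl. ring. Qed.

Definition Smat (M1 M2 : mat3) : mat3 := mkm (mapply M1 (r1 M2)) (mapply M1 (r2 M2)) (mapply M1 (r3 M2)).

Lemma dot_comm a b : dot a b = dot b a.
Proof. unfold dot; ring. Qed.

Lemma Smat_SO3 M1 M2 : SO3 M1 -> SO3 M2 -> SO3 (Smat M1 M2).
Proof.
  intros H1 H2. pose proof H2 as H2'. unfold SO3 in *. unfold Smat; simpl. rewrite !mapply_dot by auto.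
  destruct H2 as [A [B [C [D [E [F G]]]]]]. repeat split; auto.
  unfold det3; simpl. rewrite det_mult. destruct H1 as [_ [_ [_ [_ [_ [_ G1]]]]]]. rewrite G1. fold (det3 M2). rewrite G. ring.
Qed.

Lemma Smat_apply M1 M2 y : SO3 M1 -> mapply (Smat M1 M2) (mapply M1 y) = mapply M2 y.
Proof. intro H. unfold Smat, mapply at 1; simpl. rewrite !mapply_dot by auto. reflexivity. Qed.

Lemma r3_eq M x : SO3 M -> on_sphere x -> mapply M x = north -> r3 M = x.
Proof.
  intros HM Hx Hm. unfold SO3 in HM. destruct HM as [_ [_ [N3 _]]].
  unfold mapply, north in Hm. injection Hm as _ _ H3.
  destruct (r3 M) as [a b c], x as [x1 x2 x3]. unfold on_sphere, dot in *; simpl in *.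
  assert (Z : (a - x1) * (a - x1) + (b - x2) * (b - x2) + (c - x3) * (c - x3) = 0) by nra.
  apply sq3_zero in Z. f_equal; lra.
Qed.

Lemma cis_nz t : cis t <> RtoC 0.
Proof. intro E. unfold cis in E. injection E as E1 E2. pose proof (sin2_cos2 t). unfold Rsqr in *. rewrite E1, E2 in H. lra. Qed.

Lemma cis_conj t : Cconj (cis t) = cis (- t).
Proof. unfold cis, Cconj. rewrite cos_neg, sin_neg. reflexivity. Qed.

Lemma P_rz k t u : P k (rz t u) = Cmult (cis (INR k * t)) (P k u).
Proof. unfold P, rz. simpl. rewrite <- cis_pow, <- Cpow_mult_l. f_equal. unfold cis. apply injective_projections; simpl; ring. Qed.

Lemma P_nz k u : v1 u * v1 u + v2 u * v2 u = 1 -> P k u <> RtoC 0.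
Proof. intro H. unfold P. apply Cpow_nz. intro E. injection E as E1 E2. rewrite E1, E2 in H. lra. Qed.

Lemma IsPoly_P k : IsPoly (P k).
Proof. unfold P. apply (IsPoly_ext (fun z => Cpow (Cplus (RtoC (v1 z)) (Cmult (0,1) (RtoC (v2 z)))) k)).
  intro z. f_equal. apply injective_projections; simpl; ring.
  apply IsPoly_pow. apply IsPoly_plus. apply IsPoly_v1. apply IsPoly_mult. apply IsPoly_const. apply IsPoly_v2. Qed.

Lemma pint_scal c l : pint (map (fun p => (Cmult c (fst p), snd p)) l) = Cmult c (pint l).
Proof. induction l as [|[d e] l IH]; simpl. apply injective_projections; simpl; ring. rewrite IH. apply injective_projections; simpl; ring. Qed.

Lemma sphere_int_scal c f : IsPoly f -> sphere_int (fun z => Cmult c (f z)) = Cmult c (sphere_int f).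
Proof.
  intros [l H]. rewrite (sphere_int_ext f (peval l)) by auto.
  rewrite (sphere_int_ext _ (peval (map (fun p => (Cmult c (fst p), snd p)) l))).
  rewrite !sphere_int_peval. apply pint_scal.
  intros z _. rewrite H. clear H. induction l as [|[d e] l IH]; simpl. apply injective_projections; simpl; ring.
  rewrite <- IH. apply injective_projections; simpl; ring.
Qed.

Lemma cis_period_nat x n : cis (x + 2 * PI * INR n) = cis x.
Proof. unfold cis. replace (x + 2 * PI * INR n) with (x + 2 * INR n * PI) by ring. rewrite cos_period, sin_period. reflexivity. Qed.

Lemma cis_period_Z x m : cis (x + 2 * PI * IZR m) = cis x.
Proof.
  destruct (Z_le_gt_dec 0 m).
  - rewrite <- (Z2Nat.id m) by lia. rewrite <- INR_IZR_INZ. apply cis_period_nat.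
  - replace m with (- Z.of_nat (Z.to_nat (- m)))%Z by lia. rewrite opp_IZR, <- INR_IZR_INZ.
    rewrite <- (cis_period_nat (x + 2 * PI * - INR (Z.to_nat (- m))) (Z.to_nat (- m))). f_equal. ring.
Qed.

Lemma alpha_exists (k : nat) (psi : R) : (1 <= k)%nat -> exists al, - PI / INR k <= al < PI / INR k /\ cis (INR k * al) = cis psi.
Proof.
  intro Hk. assert (kp : 0 < INR k) by (apply lt_0_INR; lia). pose proof PI_RGT_0.
  set (m := (up ((psi + PI) / (2 * PI)) - 1)%Z).
  destruct (archimed ((psi + PI) / (2 * PI))) as [A1 A2].
  assert (M1 : IZR m <= (psi + PI) / (2 * PI)) by (unfold m; rewrite minus_IZR; simpl; lra).
  assert (M2 : (psi + PI) / (2 * PI) < IZR m + 1) by (unfold m; rewrite minus_IZR; simpl; lra).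
  assert (M1' : 2 * PI * IZR m <= psi + PI).
  { apply Rmult_le_compat_l with (r := 2 * PI) in M1; [|lra]. replace (2 * PI * ((psi + PI) / (2 * PI))) with (psi + PI) in M1 by (field; lra). lra. }
  assert (M2' : psi + PI < 2 * PI * (IZR m + 1)).
  { apply Rmult_lt_compat_l with (r := 2 * PI) in M2; [|lra]. replace (2 * PI * ((psi + PI) / (2 * PI))) with (psi + PI) in M2 by (field; lra). lra. }
  exists ((psi - 2 * PI * IZR m) / INR k). split; [split|].
  - apply Rmult_le_reg_r with (INR k); auto. unfold Rdiv. rewrite !Rmult_assoc, Rinv_l by lra. lra.
  - apply Rmult_lt_reg_r with (INR k); auto. unfold Rdiv. rewrite !Rmult_assoc, Rinv_l by lra. lra.
  - replace (INR k * ((psi - 2 * PI * IZR m) / INR k)) with (psi + 2 * PI * IZR (- m)) by (rewrite opp_IZR; field; lra).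
    apply cis_period_Z.
Qed.

Lemma Cdiv_eq (a b r : C) : b <> RtoC 0 -> a = Cmult r b -> Cdiv a b = r.
Proof. intros Hb Ha. rewrite Ha. field. auto. Qed.

Theorem lemma2p3 (k : nat) (x1 x2 : vec3) (q1 q2 : vec3 -> C) :
  (1 <= k)%nat ->
  on_sphere x1 -> on_sphere x2 ->
  is_gaussian_beam k x1 q1 -> is_gaussian_beam k x2 q2 ->
  let beta := acos (dot x1 x2) in
  exists alpha : R,
    - PI / INR k <= alpha < PI / INR k /\
    sphere_int (fun y => Cmult (q1 y) (Cconj (q2 y)))
      = Cmult (cis (INR k * alpha)) (RtoC (cos (beta / 2) ^ (2 * k))) /\
    (x1 <> x2 -> x1 <> vopp x2 ->
       forall y, great_circle x1 y -> great_circle x2 y ->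
         q2 y <> RtoC 0 /\ Cdiv (q1 y) (q2 y) = cis (INR k * alpha)) /\
    (x1 = x2 ->
       forall y, on_sphere y -> q2 y <> RtoC 0 ->
         Cdiv (q1 y) (q2 y) = cis (INR k * alpha)).
Proof.
  intros Hk Hx1 Hx2 [M1 [c1 [HM1 [Hn1 Hq1]]]] [M2 [c2 [HM2 [Hn2 Hq2]]]] beta.
  pose proof (r3_eq M1 x1 HM1 Hx1 Hn1) as R1.
  pose proof (r3_eq M2 x2 HM2 Hx2 Hn2) as R2.
  set (S0 := Smat M1 M2).
  assert (HS : SO3 S0) by (apply Smat_SO3; auto).
  destruct (euler S0 HS) as [al [be [ga HE]]].
  set (K := Kc k).
  assert (Hcb : cos be = dot x1 x2).
  { pose proof (f_equal v3 (HE north)) as E. unfold S0, Smat, mapply at 1 in E. simpl in E.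
    unfold mapply at 1 in E. simpl in E. rewrite R1, R2 in E. unfold north, dot in E; simpl in E.
    unfold dot. lra. }
  assert (Q1 : forall y, on_sphere y -> q1 y = Cmult (cis c1) (Cmult (RtoC K) (P k (mapply M1 y)))).
  { intros y Hy. rewrite Hq1 by auto. rewrite Qpt_formula. reflexivity. apply on_sphere_mapply; auto. }
  assert (Q2 : forall y, on_sphere y -> q2 y = Cmult (cis c2) (Cmult (RtoC K) (P k (mapply M2 y)))).
  { intros y Hy. rewrite Hq2 by auto. rewrite Qpt_formula. reflexivity. apply on_sphere_mapply; auto. }
  assert (PS : forall u, P k (mapply S0 u) = Cmult (cis (INR k * al)) (P k (rx be (rz ga u)))).
  { intro u. rewrite HE. apply P_rz. }
  assert (Pg : forall u, P k u = Cmult (cis (- (INR k * ga))) (P k (rz ga u))).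
  { intro u. rewrite P_rz. rewrite Cmult_assoc, cis_add. replace (- (INR k * ga) + INR k * ga) with 0 by ring.
    unfold cis. rewrite cos_0, sin_0. apply injective_projections; simpl; ring. }
  set (psi := c1 - c2 - INR k * al - INR k * ga).
  destruct (alpha_exists k psi Hk) as [alpha [Hrange Hcis]].
  exists alpha. split; [exact Hrange|]. split; [|split].
  - set (Fz := fun z => Cmult (P k z) (Cconj (P k (mapply S0 z)))).
    set (Hb := fun u => Cmult (P k u) (Cconj (P k (rx be u)))).
    assert (IP_Hb : IsPoly Hb) by (apply IsPoly_mult; [apply IsPoly_P | apply IsPoly_conj; apply (IsPoly_rx (P k)); apply IsPoly_P]).
    assert (IP_Fz : IsPoly Fz) by (apply IsPoly_mult; [apply IsPoly_P | apply IsPoly_conj; apply IsPoly_comp; apply IsPoly_P]).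
    set (C0 := Cmult (Cmult (cis c1) (cis (- c2))) (RtoC (K * K))).
    rewrite (sphere_int_ext _ (fun y => Cmult C0 (Fz (mapply M1 y)))).
    2: { intros y Hy. rewrite Q1, Q2 by auto. rewrite <- (Smat_apply M1 M2 y HM1). fold S0. unfold Fz, C0.
         rewrite !Cmult_conj, cis_conj. replace (Cconj (RtoC K)) with (RtoC K) by (apply injective_projections; simpl; ring).
         rewrite RtoC_mult. ring. }
    rewrite sphere_int_scal by (apply (IsPoly_comp Fz); auto).
    rewrite sphere_int_SO3 by auto.
    rewrite (sphere_int_fext Fz (fun z => Cmult (cis (- (INR k * al) - INR k * ga)) (Hb (rz ga z)))).
    2: { intro z. unfold Fz, Hb. rewrite PS, (Pg z), Cmult_conj, cis_conj.
         replace (- (INR k * al) - INR k * ga) with (- (INR k * ga) + - (INR k * al)) by ring. rewrite <- cis_add. ring. }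
    rewrite sphere_int_scal by (apply (IsPoly_rz Hb); auto).
    rewrite sphere_int_rz by auto.
    unfold Hb. rewrite dint.
    rewrite Hcis. unfold C0.
    assert (Hc2 : cos (beta / 2) ^ (2 * k) = ((1 + cos be) / 2) ^ k).
    { rewrite pow_mult. f_equal. pose proof (COS_bound be) as Hb1. rewrite Hcb in Hb1.
      assert (cbt : cos beta = dot x1 x2) by (apply cos_acos; auto).
      replace beta with (2 * (beta / 2)) in cbt at 1 by field. rewrite cos_2a_cos in cbt. rewrite Hcb. simpl. lra. }
    rewrite Hc2.
    replace (cis psi) with (Cmult (Cmult (cis c1) (cis (- c2))) (cis (- (INR k * al) - INR k * ga))) by (rewrite !cis_add; f_equal; unfold psi; ring).
    replace (RtoC (((1 + cos be) / 2) ^ k)) with (Cmult (RtoC (K * K)) (RtoC (2 * PI * ((1 + cos be) / 2) ^ k * SI (2 * k + 1) 0))).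
    ring.
    rewrite <- RtoC_mult. f_equal. pose proof (Kc_norm k) as KN. fold K in KN.
    transitivity (((1 + cos be) / 2) ^ k * (K * K * (2 * PI * SI (2 * k + 1) 0))). ring. rewrite KN. ring.
  - intros Hne1 Hne2 y [Hy1 Hd1] [Hy2 Hd2].
    set (u := mapply M1 y).
    assert (Hu : on_sphere u) by (apply on_sphere_mapply; auto).
    assert (u3 : v3 u = 0) by (unfold u, mapply; simpl; rewrite R1; auto).
    assert (Su3 : v3 (mapply S0 u) = 0) by (unfold u, S0; rewrite Smat_apply by auto; unfold mapply; simpl; rewrite R2; auto).
    assert (sb : sin be <> 0).
    { intro s0. pose proof (sin2_cos2 be) as H. rewrite s0, Hcb in H. unfold Rsqr in H.
      assert (H' : (dot x1 x2 - 1) * (dot x1 x2 + 1) = 0) by lra. apply Rmult_integral in H'.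
      destruct x1 as [a1 a2 a3], x2 as [b1 b2 b3]. unfold on_sphere, dot in *; simpl in *.
      destruct H' as [H' | H'].
      - apply Hne1. assert (Z : (a1 - b1) * (a1 - b1) + (a2 - b2) * (a2 - b2) + (a3 - b3) * (a3 - b3) = 0) by nra.
        apply sq3_zero in Z. f_equal; lra.
      - apply Hne2. assert (Z : (a1 + b1) * (a1 + b1) + (a2 + b2) * (a2 + b2) + (a3 + b3) * (a3 + b3) = 0) by nra.
        apply sq3_zero in Z. unfold vopp; simpl. f_equal; lra. }
    set (v := rz ga u).
    assert (v3' : v3 v = 0) by (unfold v, rz; simpl; auto).
    assert (v2' : v2 v = 0).
    { pose proof (f_equal v3 (HE u)) as H. rewrite Su3 in H. fold v in H.
      change (v3 (rz al (rx be v))) with (sin be * v2 v + cos be * v3 v) in H.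
      rewrite v3' in H. assert (H0 : sin be * v2 v = 0) by lra. apply Rmult_integral in H0. destruct H0; [contradiction|auto]. }
    assert (rxv : rx be v = v).
    { destruct v as [w1 w2 w3]. simpl in v2', v3'. subst. unfold rx; simpl. f_equal; ring. }
    assert (PSu : P k (mapply S0 u) = Cmult (cis (INR k * al)) (Cmult (cis (INR k * ga)) (P k u))).
    { rewrite PS. fold v. rewrite rxv. unfold v. rewrite P_rz. reflexivity. }
    assert (Pu : P k u <> RtoC 0).
    { apply P_nz. unfold on_sphere, dot in Hu. rewrite u3 in Hu. lra. }
    assert (Knz : RtoC K <> RtoC 0).
    { intro E. injection E as E. pose proof (Kc_norm k) as KN. fold K in KN. rewrite E in KN. lra. }
    assert (Eq2 : q2 y = Cmult (cis c2) (Cmult (RtoC K) (Cmult (cis (INR k * al)) (Cmult (cis (INR k * ga)) (P k u))))).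
    { rewrite Q2 by auto. rewrite <- (Smat_apply M1 M2 y HM1). fold S0. fold u. rewrite PSu. reflexivity. }
    assert (q2nz : q2 y <> RtoC 0).
    { rewrite Eq2. repeat apply Cmult_neq_0; auto using cis_nz. }
    split; auto. rewrite Hcis. apply Cdiv_eq; auto.
    rewrite Q1, Eq2 by auto. fold u.
    replace (cis c1) with (cis (psi + c2 + INR k * al + INR k * ga)) by (f_equal; unfold psi; ring).
    rewrite <- !cis_add. ring.
  - intros Heq y Hy Hq2nz.
    assert (cb1 : cos be = 1) by (rewrite Hcb, <- Heq; exact Hx1).
    assert (sb0 : sin be = 0) by (pose proof (sin2_cos2 be) as H; unfold Rsqr in *; rewrite cb1 in H; nra).
    assert (rxid : forall w, rx be w = w) by (intros [w1 w2 w3]; unfold rx; rewrite cb1, sb0; simpl; f_equal; ring).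
    set (u := mapply M1 y).
    assert (Eq2 : q2 y = Cmult (cis c2) (Cmult (RtoC K) (Cmult (cis (INR k * al)) (Cmult (cis (INR k * ga)) (P k u))))).
    { rewrite Q2 by auto. rewrite <- (Smat_apply M1 M2 y HM1). fold S0. fold u. rewrite PS, rxid, P_rz. reflexivity. }
    rewrite Hcis. apply Cdiv_eq; auto.
    rewrite Q1, Eq2 by auto. fold u.
    replace (cis c1) with (cis (psi + c2 + INR k * al + INR k * ga)) by (f_equal; unfold psi; ring).
    rewrite <- !cis_add. ring.
Qed.
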